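(* As $P_1P_2P_3$ ranges over all 3-periodics of $\mathcal{E}$, the Mittenpunkt $X_9^\dagger$ of the focus-inversive triangle moves along the circle with center and radius \[C_9^\dagger=\left(-c\left(1+\frac{\rho^2}{2b^2}\right),\,0\right),\qquad R_9^\dagger=\rho^2\,\frac{2a^2-b^2-\delta}{2ab^2}.\] Moreover, the inversion of $C_9^\dagger$ in the circle of radius $\rho$ centered at $f_1$ is $\left(-\frac{a^2+b^2}{c},0\right)$.
   Context: Let $a>b>0$ and let $\mathcal{E}$ be the ellipse $x^2/a^2+y^2/b^2=1$ (the elliptic billiard). Set $c=\sqrt{a^2-b^2}$, $\delta=\sqrt{a^4-a^2b^2+b^4}$, and let the foci be $f_1=(-c,0)$, $f_2=(c,0)$. A 3-periodic is a triangle $P_1P_2P_3$ with vertices on $\mathcal{E}$ such that at each vertex the normal to $\mathcal{E}$ bisects the angle formed by the two sides meeting at that vertex; these form a one-parameter family (there is one through every point of $\mathcal{E}$). Fix $\rho>0$. The focus-inversive triangle of a 3-periodic $P_1P_2P_3$ is the triangle with vertices $P_i^\dagger=f_1+(\rho/d_{1,i})^2(P_i-f_1)$, where $d_{1,i}=|P_i-f_1|$, i.e. the inversions of the $P_i$ in the circle of radius $\rho$ centered at $f_1$. The Mittenpunkt $X_9$ of a triangle is the point of concurrence of the lines joining each excenter to the midpoint of the corresponding side (equivalently, the point with barycentric coordinates $a_s(s-a_s):b_s(s-b_s):c_s(s-c_s)$, where $a_s,b_s,c_s$ are the side lengths and $s$ the semiperimeter). *)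

(* Defs.v *)
From Stdlib Require Import Reals.
Open Scope R_scope.

Definition pt : Type := (R * R)%type.

Definition edist (p q : pt) : R :=
  sqrt ((fst p - fst q) ^ 2 + (snd p - snd q) ^ 2).

Definition on_ellipse (a b : R) (p : pt) : Prop :=
  (fst p) ^ 2 / a ^ 2 + (snd p) ^ 2 / b ^ 2 = 1.

(* At vertex P with neighbours Q and R, the normal to the ellipse at P,
   direction (x/a^2, y/b^2), is parallel to the internal angle bisector
   u + v, where u, v are the unit vectors from P towards Q and R. *)
Definition normal_bisects (a b : R) (P Q S : pt) : Prop :=
  let ux := (fst Q - fst P) / edist P Q in
  let uy := (snd Q - snd P) / edist P Q in
  let vx := (fst S - fst P) / edist P S in
  let vy := (snd S - snd P) / edist P S in
  (ux + vx) * (snd P / b ^ 2) - (uy + vy) * (fst P / a ^ 2) = 0.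

Definition three_periodic (a b : R) (P1 P2 P3 : pt) : Prop :=
  P1 <> P2 /\ P2 <> P3 /\ P1 <> P3 /\
  on_ellipse a b P1 /\ on_ellipse a b P2 /\ on_ellipse a b P3 /\
  normal_bisects a b P1 P2 P3 /\
  normal_bisects a b P2 P3 P1 /\
  normal_bisects a b P3 P1 P2.

Definition cfoc (a b : R) : R := sqrt (a ^ 2 - b ^ 2).
Definition delta (a b : R) : R := sqrt (a ^ 4 - a ^ 2 * b ^ 2 + b ^ 4).
Definition f1 (a b : R) : pt := (- cfoc a b, 0).

Definition focus_inv (a b rho : R) (P : pt) : pt :=
  let d := edist P (f1 a b) in
  (fst (f1 a b) + (rho / d) ^ 2 * (fst P - fst (f1 a b)),
   snd (f1 a b) + (rho / d) ^ 2 * (snd P - snd (f1 a b))).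

(* Mittenpunkt X9 via barycentrics a_s(s-a_s) : b_s(s-b_s) : c_s(s-c_s). *)
Definition mittenpunkt (A B C : pt) : pt :=
  let la := edist B C in
  let lb := edist C A in
  let lc := edist A B in
  let s := (la + lb + lc) / 2 in
  let wa := la * (s - la) in
  let wb := lb * (s - lb) in
  let wc := lc * (s - lc) in
  let w := wa + wb + wc in
  ((wa * fst A + wb * fst B + wc * fst C) / w,
   (wa * snd A + wb * snd B + wc * snd C) / w).

Definition C9dag (a b rho : R) : pt :=
  (- cfoc a b * (1 + rho ^ 2 / (2 * b ^ 2)), 0).

Definition R9dag (a b rho : R) : R :=
  rho ^ 2 * (2 * a ^ 2 - b ^ 2 - delta a b) / (2 * a * b ^ 2).

(* Main.v *)
Require Import Defs.
From Stdlib Require Import Reals Lra Psatz.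
Open Scope R_scope.

Lemma sq_pos_neq x : x <> 0 -> 0 < x^2.
Proof. intro H. pose proof (Rsqr_pos_lt x H). unfold Rsqr in *. nra. Qed.

Lemma edist_sym p q : edist p q = edist q p.
Proof. unfold edist. f_equal. ring. Qed.

Lemma edist_sq p q : (edist p q)^2 = (fst p - fst q)^2 + (snd p - snd q)^2.
Proof. unfold edist. rewrite pow2_sqrt; [reflexivity|]. apply Rplus_le_le_0_compat; apply pow2_ge_0. Qed.

Lemma edist_pos p q : p <> q -> 0 < edist p q.
Proof.
  intro H. unfold edist. apply sqrt_lt_R0.
  destruct p as [x1 y1], q as [x2 y2]; simpl.
  destruct (Req_dec x1 x2); destruct (Req_dec y1 y2); subst.
  - exfalso; apply H; reflexivity.
  - pose proof (sq_pos_neq (y1-y2)). pose proof (pow2_ge_0 (x2-x2)). lra.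
  - pose proof (sq_pos_neq (x1-x2)). pose proof (pow2_ge_0 (y2-y2)). lra.
  - pose proof (sq_pos_neq (x1-x2)). pose proof (pow2_ge_0 (y1-y2)). lra.
Qed.

Lemma bis_alg ux uy vx vy nx ny :
  ux^2 + uy^2 = 1 -> vx^2 + vy^2 = 1 ->
  (ux + vx) * ny - (uy + vy) * nx = 0 ->
  (ux + vx <> 0 \/ uy + vy <> 0) ->
  ux * nx + uy * ny = vx * nx + vy * ny.
Proof.
  intros Hu Hv H Hw.
  assert (Hid : ((ux-vx)*nx + (uy-vy)*ny) * ((ux+vx)^2 + (uy+vy)^2)
     = ((ux-vx)*(ux+vx) + (uy-vy)*(uy+vy)) * (nx*(ux+vx) + ny*(uy+vy))
       + ((ux-vx)*(uy+vy) - (uy-vy)*(ux+vx)) * (nx*(uy+vy) - ny*(ux+vx))) by ring.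
  assert (H1 : (ux-vx)*(ux+vx) + (uy-vy)*(uy+vy) = 0) by nra.
  assert (H2 : nx*(uy+vy) - ny*(ux+vx) = 0) by lra.
  rewrite H1, H2 in Hid.
  assert (Hpos : 0 < (ux+vx)^2 + (uy+vy)^2).
  { destruct Hw as [Hw|Hw].
    - pose proof (pow2_ge_0 (uy+vy)). assert (0 < (ux+vx)^2) by (apply pow_lt_pos_neq0 || idtac; nra). lra.
    - pose proof (pow2_ge_0 (ux+vx)). assert (0 < (uy+vy)^2) by nra. lra. }
  assert (((ux-vx)*nx + (uy-vy)*ny) = 0).
  { apply (Rmult_eq_reg_r ((ux+vx)^2 + (uy+vy)^2)); [|lra]. lra. }
  lra.
Qed.

Lemma not_opp a b x y x2 y2 x3 y3 dQ dS :
  0 < a -> 0 < b -> 0 < dQ -> 0 < dS ->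
  x^2/a^2 + y^2/b^2 = 1 -> x2^2/a^2 + y2^2/b^2 = 1 -> x3^2/a^2 + y3^2/b^2 = 1 ->
  (x2, y2) <> (x3, y3) ->
  (x2 - x)/dQ + (x3 - x)/dS = 0 -> (y2 - y)/dQ + (y3 - y)/dS = 0 -> False.
Proof.
  intros ha hb hq hs e1 e2 e3 hne h1 h2.
  assert (hx : x * (dQ + dS) = dS * x2 + dQ * x3).
  { assert (E: dS*(x2-x) + dQ*(x3-x) = dQ*dS*((x2 - x)/dQ + (x3 - x)/dS)) by (field; lra). rewrite h1 in E. lra. }
  assert (hy : y * (dQ + dS) = dS * y2 + dQ * y3).
  { assert (E: dS*(y2-y) + dQ*(y3-y) = dQ*dS*((y2 - y)/dQ + (y3 - y)/dS)) by (field; lra). rewrite h2 in E. lra. }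
  assert (key : dQ * dS * ((x2-x3)^2/a^2 + (y2-y3)^2/b^2) = 0).
  { assert (E : (x * (dQ + dS))^2/a^2 + (y*(dQ+dS))^2/b^2 = (dQ+dS)^2).
    { replace ((x * (dQ + dS))^2/a^2 + (y*(dQ+dS))^2/b^2) with ((dQ+dS)^2 * (x^2/a^2+y^2/b^2)) by (field; lra).
      rewrite e1; ring. }
    rewrite hx, hy in E.
    replace (dQ * dS * ((x2-x3)^2/a^2 + (y2-y3)^2/b^2)) with
      (dS^2 * (x2^2/a^2 + y2^2/b^2) + dQ^2 * (x3^2/a^2+y3^2/b^2) + dQ*dS*((x2^2/a^2 + y2^2/b^2) + (x3^2/a^2+y3^2/b^2))
       - ((dS * x2 + dQ * x3) ^ 2 / a ^ 2 + (dS * y2 + dQ * y3) ^ 2 / b ^ 2)) by (field; lra).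
    rewrite e2, e3, E. ring. }
  assert (hF : (x2-x3)^2/a^2 + (y2-y3)^2/b^2 = 0).
  { assert (0 < dQ*dS) by nra. apply (Rmult_eq_reg_l (dQ*dS)); [lra|lra]. }
  assert (Ha2 : 0 < a^2) by nra. assert (Hb2 : 0 < b^2) by nra.
  assert (0 <= (x2-x3)^2/a^2) by (apply Rle_mult_inv_pos; [apply pow2_ge_0|lra]).
  assert (0 <= (y2-y3)^2/b^2) by (apply Rle_mult_inv_pos; [apply pow2_ge_0|lra]).
  assert (A1 : (x2-x3)^2/a^2 = 0) by lra. assert (A2 : (y2-y3)^2/b^2 = 0) by lra.
  assert ((x2-x3)^2 = 0) by (apply (Rmult_eq_reg_r (/a^2)); [lra|]; apply Rinv_neq_0_compat; lra) .
  assert ((y2-y3)^2 = 0) by (apply (Rmult_eq_reg_r (/b^2)); [lra|]; apply Rinv_neq_0_compat; lra).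
  apply hne. f_equal; nra.
Qed.

Definition gf (a b : R) (p q : pt) : R := fst p * fst q / a^2 + snd p * snd q / b^2.

Lemma unit_len p q : p <> q ->
  ((fst q - fst p)/edist p q)^2 + ((snd q - snd p)/edist p q)^2 = 1.
Proof.
  intro H. pose proof (edist_pos p q H). pose proof (edist_sq p q).
  replace (((fst q - fst p)/edist p q)^2 + ((snd q - snd p)/edist p q)^2)
    with (((fst p - fst q)^2 + (snd p - snd q)^2)/ (edist p q)^2) by (field; lra).
  rewrite <- H1. field. lra.
Qed.

Lemma vertex_lemma a b P Q S :
  0 < a -> 0 < b -> on_ellipse a b P -> on_ellipse a b Q -> on_ellipse a b S ->
  P <> Q -> P <> S -> Q <> S -> normal_bisects a b P Q S ->
  (gf a b P Q - 1) / edist P Q = (gf a b P S - 1) / edist P S.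
Proof.
  intros ha hb eP eQ eS hPQ hPS hQS hn.
  pose proof (edist_pos P Q hPQ) as dq. pose proof (edist_pos P S hPS) as ds.
  unfold normal_bisects in hn.
  destruct P as [x y], Q as [x2 y2], S as [x3 y3]. unfold on_ellipse, gf in *; cbn [fst snd] in *.
  set (dQ := edist (x,y) (x2,y2)) in *. set (dS := edist (x,y) (x3,y3)) in *.
  assert (Hu := unit_len (x,y) (x2,y2) hPQ). assert (Hv := unit_len (x,y) (x3,y3) hPS). cbn [fst snd] in Hu, Hv.
  fold dQ in Hu. fold dS in Hv.
  assert (Hw : (x2 - x)/dQ + (x3 - x)/dS <> 0 \/ (y2 - y)/dQ + (y3 - y)/dS <> 0).
  { destruct (Req_dec ((x2 - x)/dQ + (x3 - x)/dS) 0) as [h1|h1]; [|left; exact h1].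
    destruct (Req_dec ((y2 - y)/dQ + (y3 - y)/dS) 0) as [h2|h2]; [|right; exact h2].
    exfalso. exact (not_opp a b x y x2 y2 x3 y3 dQ dS ha hb dq ds eP eQ eS hQS h1 h2). }
  pose proof (bis_alg _ _ _ _ (x/a^2) (y/b^2) Hu Hv hn Hw) as K.
  assert (a^2 <> 0) by nra. assert (b^2 <> 0) by nra.
  replace ((x * x2 / a ^ 2 + y * y2 / b ^ 2 - 1) / dQ) with
    ((x2 - x) / dQ * (x / a ^ 2) + (y2 - y) / dQ * (y / b ^ 2)).
  2:{ rewrite <- eP. field. split; lra. }
  replace ((x * x3 / a ^ 2 + y * y3 / b ^ 2 - 1) / dS) with
    ((x3 - x) / dS * (x / a ^ 2) + (y3 - y) / dS * (y / b ^ 2)).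
  2:{ rewrite <- eP. field. split; lra. }
  exact K.
Qed.

Lemma chord_id a b X Y X' Y' : X^2+Y^2 = 1 -> X'^2+Y'^2=1 ->
 a^2*(X-X')^2 + b^2*(Y-Y')^2 = (1 - X*X' - Y*Y')*((a^2+b^2) - (a^2-b^2)*(X*X'-Y*Y')).
Proof. intros h1 h2.
 assert (E: a^2*(X-X')^2 + b^2*(Y-Y')^2 - (1 - X*X' - Y*Y')*((a^2+b^2) - (a^2-b^2)*(X*X'-Y*Y'))
   = a^2*((X^2+Y^2-1)*Y'^2 + (1-X^2)*(X'^2+Y'^2-1)) + b^2*((X^2+Y^2-1)*X'^2 + (1-Y^2)*(X'^2+Y'^2-1))) by ring.
 rewrite h1, h2 in E. lra. Qed.

Lemma one_minus_g_pos X Y X' Y' : X^2+Y^2 = 1 -> X'^2+Y'^2=1 -> (X <> X' \/ Y <> Y') ->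
  0 < 1 - X*X' - Y*Y'.
Proof.
  intros h1 h2 hn.
  assert (E : 1 - X*X' - Y*Y' = ((X-X')^2 + (Y-Y')^2)/2).
  { replace (1 - X*X' - Y*Y') with ((X^2+Y^2)/2 + (X'^2+Y'^2)/2 - X*X' - Y*Y') by (rewrite h1, h2; field). field. }
  rewrite E. destruct hn as [h|h].
  - pose proof (sq_pos_neq (X-X')). pose proof (pow2_ge_0 (Y-Y')). assert (X - X' <> 0) by lra. lra.
  - pose proof (sq_pos_neq (Y-Y')). pose proof (pow2_ge_0 (X-X')). assert (Y - Y' <> 0) by lra. lra.
Qed.

Lemma pair_rel a b X Y X' Y' J d :
  X^2+Y^2 = 1 -> X'^2+Y'^2=1 -> (X <> X' \/ Y <> Y') ->
  d^2 = a^2*(X-X')^2 + b^2*(Y-Y')^2 -> X*X' + Y*Y' - 1 = J*d ->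
  (1 - J^2*(a^2-b^2)) * (X*X') + (1 + J^2*(a^2-b^2)) * (Y*Y') = 1 - J^2*(a^2+b^2).
Proof.
  intros h1 h2 hn hd hJ.
  pose proof (one_minus_g_pos X Y X' Y' h1 h2 hn) as hp.
  pose proof (chord_id a b X Y X' Y' h1 h2) as hc.
  assert (E : (1 - X*X' - Y*Y')^2 = J^2 * d^2).
  { replace (1 - X*X' - Y*Y') with (-(X*X' + Y*Y' - 1)) by ring. rewrite hJ. ring. }
  rewrite hd, hc in E.
  assert (E2 : 1 - X*X' - Y*Y' = J^2 * ((a^2+b^2) - (a^2-b^2)*(X*X'-Y*Y'))).
  { apply (Rmult_eq_reg_l (1 - X*X' - Y*Y')); [|lra]. rewrite <- Rmult_assoc.
    replace ((1 - X * X' - Y * Y') * (1 - X * X' - Y * Y')) with ((1 - X*X' - Y*Y')^2) by ring.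
    rewrite E. ring. }
  lra.
Qed.

Lemma circ a b x y : 0 < a -> 0 < b -> on_ellipse a b (x,y) -> (x/a)^2 + (y/b)^2 = 1.
Proof. unfold on_ellipse. cbn [fst snd]. intros ha hb h. rewrite <- h. field. split; lra. Qed.

Lemma vieta al be ka X Y X' Y' :
  X^2+Y^2 = 1 -> X'^2+Y'^2=1 -> al*X + be*Y = ka -> al*X' + be*Y' = ka ->
  (X <> X' \/ Y <> Y') -> al^2 + be^2 <> 0 ->
  (al^2+be^2)*(X*X') = ka^2 - be^2 /\ (al^2+be^2)*(Y*Y') = ka^2 - al^2 /\
  (al^2+be^2)*(X+X') = 2*ka*al.
Proof.
  intros h1 h2 l1 l2 hn hN.
  set (N := al^2+be^2) in *.
  set (t := al*(Y'-Y) - be*(X'-X)).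
  assert (hl : al*(X'-X) + be*(Y'-Y) = 0) by lra.
  assert (ex : N*(X'-X) = - be * t).
  { assert (E: N*(X'-X) - (- be * t) = al*(al*(X'-X) + be*(Y'-Y))) by (unfold N, t; ring). rewrite hl in E. lra. }
  assert (ey : N*(Y'-Y) = al * t).
  { assert (E: N*(Y'-Y) - (al * t) = be*(al*(X'-X) + be*(Y'-Y))) by (unfold N, t; ring). rewrite hl in E. lra. }
  assert (hc : 2*(X*(X'-X) + Y*(Y'-Y)) + (X'-X)^2 + (Y'-Y)^2 = 0).
  { replace (2*(X*(X'-X) + Y*(Y'-Y)) + (X'-X)^2 + (Y'-Y)^2) with ((X'^2+Y'^2) - (X^2+Y^2)) by ring. lra. }
  assert (hc2 : N * t * (2*(al*Y - be*X) + t) = 0).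
  { assert (E : N^2 * (2*(X*(X'-X) + Y*(Y'-Y)) + (X'-X)^2 + (Y'-Y)^2)
       = 2*N*(X*(N*(X'-X)) + Y*(N*(Y'-Y))) + (N*(X'-X))^2 + (N*(Y'-Y))^2) by ring.
    rewrite hc, ex, ey in E.
    replace (N * t * (2*(al*Y - be*X) + t)) with (2 * N * (X * (- be * t) + Y * (al * t)) + (- be * t) ^ 2 + (al * t) ^ 2) by (unfold N; ring).
    lra. }
  assert (ht : t <> 0).
  { intro h0. rewrite h0 in ex, ey.
    assert (X'-X = 0). { apply (Rmult_eq_reg_l N); [|exact hN]. rewrite ex. ring. }
    assert (Y'-Y = 0). { apply (Rmult_eq_reg_l N); [|exact hN]. rewrite ey. ring. }
    destruct hn; lra. }
  assert (tv : t = 2*(be*X - al*Y)).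
  { assert (N*t <> 0) by (apply Rmult_integral_contrapositive; split; assumption).
    assert (2*(al*Y - be*X) + t = 0).
    { apply (Rmult_eq_reg_l (N*t)); [|assumption]. rewrite hc2. ring. }
    lra. }
  assert (eX' : N*X' = N*X - be*t) by lra.
  assert (eY' : N*Y' = N*Y + al*t) by lra.
  split; [|split].
  - replace (N*(X*X')) with (X*(N*X')) by ring. rewrite eX', tv. unfold N.
    replace (ka^2) with ((al*X+be*Y)^2) by (rewrite l1; ring).
    replace (be^2) with (be^2*(X^2+Y^2)) at 2 by (rewrite h1; ring). ring.
  - replace (N*(Y*Y')) with (Y*(N*Y')) by ring. rewrite eY', tv. unfold N.
    replace (ka^2) with ((al*X+be*Y)^2) by (rewrite l1; ring).
    replace (al^2) with (al^2*(X^2+Y^2)) at 2 by (rewrite h1; ring). ring.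
  - replace (N*(X+X')) with (N*X + N*X') by ring. rewrite eX', tv. unfold N. rewrite <- l1. ring.
Qed.

Lemma vertex_closure M ka Xi Yi Xj Yj Xk Yk :
  Xi^2+Yi^2 = 1 -> Xj^2+Yj^2 = 1 -> Xk^2+Yk^2 = 1 ->
  (Xj <> Xk \/ Yj <> Yk) ->
  ((1-M)*Xi)^2 + ((1+M)*Yi)^2 <> 0 ->
  (1-M)*(Xi*Xj) + (1+M)*(Yi*Yj) = ka ->
  (1-M)*(Xi*Xk) + (1+M)*(Yi*Yk) = ka ->
  (1-M)*(Xj*Xk) + (1+M)*(Yj*Yk) = ka ->
  Xi^2 * ((1-M)^2*(ka+1+M) - (1+M)^2*(ka+1-M)) = 2*ka^2 - (1+M)^2*(ka+1-M).
Proof.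
  intros hi hj hk hn hN pij pik pjk.
  destruct (vieta ((1-M)*Xi) ((1+M)*Yi) ka Xj Yj Xk Yk hj hk) as [v1 [v2 _]];
    [rewrite <- pij; ring | rewrite <- pik; ring | exact hn | exact hN |].
  set (N := ((1-M)*Xi)^2 + ((1+M)*Yi)^2) in *.
  assert (E : (1-M)*(ka^2 - ((1+M)*Yi)^2) + (1+M)*(ka^2 - ((1-M)*Xi)^2) - ka*N = 0).
  { rewrite <- v1, <- v2. replace ((1 - M) * (N * (Xj * Xk)) + (1 + M) * (N * (Yj * Yk)) - ka * N) with (N * ((1-M)*(Xj*Xk)+(1+M)*(Yj*Yk) - ka)) by ring. rewrite pjk. ring. }
  assert (F : Xi^2 * ((1-M)^2*(ka+1+M) - (1+M)^2*(ka+1-M)) - (2*ka^2 - (1+M)^2*(ka+1-M))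
     = - ((1-M)*(ka^2 - ((1+M)*Yi)^2) + (1+M)*(ka^2 - ((1-M)*Xi)^2) - ka*N) + (1+M)^2*(ka+1-M)*(1 - (Xi^2+Yi^2))) by (unfold N; ring).
  rewrite E, hi in F. lra.
Qed.


Lemma sym_contra M ka X Y :
  X^2 + Y^2 = 1 -> 0 <= M -> ~ (ka = 0 /\ M = 1) ->
  (1-M)*(-X*X) + (1+M)*(Y*Y) = ka ->
  (1-M)*(X*X) + (1+M)*(-Y*Y) = ka ->
  (1-M)*(-X*X) + (1+M)*(-Y*Y) = ka -> False.
Proof.
  intros h hM hk e1 e2 e3.
  assert (ka = 0) by lra.
  assert (hp : (1-M)*(X*X) = 0) by lra.
  assert (hr : (1+M)*(Y*Y) = 0) by lra.
  assert (Y*Y = 0). { apply (Rmult_eq_reg_l (1+M)); lra. }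
  assert (X*X = 1) by nra.
  apply hk. split; [assumption|]. rewrite H1 in hp. lra.
Qed.

Lemma sq_eq_cases u v : u^2 = v^2 -> u = v \/ u = -v.
Proof.
  intro h. assert ((u-v)*(u+v) = 0) by (replace ((u-v)*(u+v)) with (u^2 - v^2) by ring; lra).
  destruct (Rmult_integral _ _ H); [left|right]; lra.
Qed.

Lemma no_equal_sq M ka X1 Y1 X2 Y2 X3 Y3 :
  X1^2 + Y1^2 = 1 -> 0 <= M -> ~ (ka = 0 /\ M = 1) ->
  X2^2 = X1^2 -> X3^2 = X1^2 -> Y2^2 = Y1^2 -> Y3^2 = Y1^2 ->
  (X1 <> X2 \/ Y1 <> Y2) -> (X1 <> X3 \/ Y1 <> Y3) -> (X2 <> X3 \/ Y2 <> Y3) ->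
  (1-M)*(X1*X2) + (1+M)*(Y1*Y2) = ka ->
  (1-M)*(X1*X3) + (1+M)*(Y1*Y3) = ka ->
  (1-M)*(X2*X3) + (1+M)*(Y2*Y3) = ka -> False.
Proof.
  intros h hM hk sx2 sx3 sy2 sy3 d12 d13 d23 p12 p13 p23.
  destruct (sq_eq_cases _ _ sx2); destruct (sq_eq_cases _ _ sx3);
  destruct (sq_eq_cases _ _ sy2); destruct (sq_eq_cases _ _ sy3); subst X2 X3 Y2 Y3;
  try (destruct d12; lra); try (destruct d13; lra); try (destruct d23; lra);
  apply (sym_contra M ka X1 Y1); auto; lra.
Qed.

Lemma closure M ka X1 Y1 X2 Y2 X3 Y3 :
  X1^2 + Y1^2 = 1 -> X2^2 + Y2^2 = 1 -> X3^2 + Y3^2 = 1 -> 0 <= M -> ~ (ka = 0 /\ M = 1) ->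
  (X1 <> X2 \/ Y1 <> Y2) -> (X1 <> X3 \/ Y1 <> Y3) -> (X2 <> X3 \/ Y2 <> Y3) ->
  ((1-M)*X1)^2 + ((1+M)*Y1)^2 <> 0 -> ((1-M)*X2)^2 + ((1+M)*Y2)^2 <> 0 -> ((1-M)*X3)^2 + ((1+M)*Y3)^2 <> 0 ->
  (1-M)*(X1*X2) + (1+M)*(Y1*Y2) = ka ->
  (1-M)*(X1*X3) + (1+M)*(Y1*Y3) = ka ->
  (1-M)*(X2*X3) + (1+M)*(Y2*Y3) = ka ->
  (1-M)^2*(ka+1+M) - (1+M)^2*(ka+1-M) = 0.
Proof.
  intros c1 c2 c3 hM hk d12 d13 d23 n1 n2 n3 p12 p13 p23.
  assert (p21 : (1-M)*(X2*X1) + (1+M)*(Y2*Y1) = ka) by (rewrite <- p12; ring).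
  assert (p31 : (1-M)*(X3*X1) + (1+M)*(Y3*Y1) = ka) by (rewrite <- p13; ring).
  assert (p32 : (1-M)*(X3*X2) + (1+M)*(Y3*Y2) = ka) by (rewrite <- p23; ring).
  assert (d31 : X1 <> X3 \/ Y1 <> Y3) by exact d13.
  assert (d21' : X1 <> X2 \/ Y1 <> Y2) by exact d12.
  pose proof (vertex_closure M ka X1 Y1 X2 Y2 X3 Y3 c1 c2 c3 d23 n1 p12 p13 p23) as v1.
  pose proof (vertex_closure M ka X2 Y2 X1 Y1 X3 Y3 c2 c1 c3 d13 n2 p21 p23 p13) as v2.
  pose proof (vertex_closure M ka X3 Y3 X1 Y1 X2 Y2 c3 c1 c2 d12 n3 p31 p32 p12) as v3.
  set (Br := (1-M)^2*(ka+1+M) - (1+M)^2*(ka+1-M)) in *.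
  destruct (Req_dec Br 0) as [h|h]; [exact h|exfalso].
  assert (sx2 : X2^2 = X1^2). { apply (Rmult_eq_reg_r Br); [rewrite v1, v2; reflexivity|exact h]. }
  assert (sx3 : X3^2 = X1^2). { apply (Rmult_eq_reg_r Br); [rewrite v1, v3; reflexivity|exact h]. }
  assert (sy2 : Y2^2 = Y1^2). { rewrite <- c1 in c2. rewrite sx2 in c2. lra. }
  assert (sy3 : Y3^2 = Y1^2). { rewrite <- c1 in c3. rewrite sx3 in c3. lra. }
  exact (no_equal_sq M ka X1 Y1 X2 Y2 X3 Y3 c1 hM hk sx2 sx3 sy2 sy3 d12 d13 d23 p12 p13 p23).
Qed.

Lemma edist_nonneg p q : 0 <= edist p q.
Proof. unfold edist. apply sqrt_pos. Qed.

Lemma edist_sq' p q : (edist p q)^2 = (fst p - fst q)^2 + (snd p - snd q)^2.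
Proof. unfold edist. rewrite pow2_sqrt; [reflexivity|]. apply Rplus_le_le_0_compat; apply pow2_ge_0. Qed.

Lemma tri_ineq p q r : edist p r <= edist p q + edist q r.
Proof.
  pose proof (edist_sq' p r). pose proof (edist_sq' p q). pose proof (edist_sq' q r).
  pose proof (edist_nonneg p r). pose proof (edist_nonneg p q). pose proof (edist_nonneg q r).
  set (ux := fst p - fst q) in *. set (uy := snd p - snd q) in *.
  set (vx := fst q - fst r) in *. set (vy := snd q - snd r) in *.
  assert (E : (fst p - fst r)^2 + (snd p - snd r)^2 = (ux+vx)^2 + (uy+vy)^2) by (unfold ux, uy, vx, vy; ring).
  rewrite E in H.
  assert (CS : ux*vx + uy*vy <= edist p q * edist q r).
  { assert (K : (ux*vx+uy*vy)^2 <= (edist p q * edist q r)^2).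
    { rewrite Rpow_mult_distr, H0, H1. assert (0 <= (ux*vy - uy*vx)^2) by apply pow2_ge_0.
      replace ((ux ^ 2 + uy ^ 2) * (vx ^ 2 + vy ^ 2)) with ((ux*vx+uy*vy)^2 + (ux*vy - uy*vx)^2) by ring. lra. }
    assert (0 <= edist p q * edist q r) by (apply Rmult_le_pos; assumption).
    destruct (Rle_or_lt (ux*vx+uy*vy) 0); [nra|]. nra. }
  assert (S : (edist p r)^2 <= (edist p q + edist q r)^2).
  { rewrite H. replace ((edist p q + edist q r)^2) with ((edist p q)^2 + (edist q r)^2 + 2*(edist p q * edist q r)) by ring.
    rewrite H0, H1. nra. }
  nra.
Qed.

Lemma W_pos A B C : 0 < edist B C -> 0 < edist C A -> 0 < edist A B ->
  let la := edist B C in let lb := edist C A in let lc := edist A B in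
  let s := (la + lb + lc)/2 in
  0 < la*(s-la) + lb*(s-lb) + lc*(s-lc).
Proof.
  intros h1 h2 h3 la lb lc s.
  pose proof (tri_ineq B A C). pose proof (tri_ineq C B A). pose proof (tri_ineq A C B).
  rewrite (edist_sym B A) in H. rewrite (edist_sym A C) in H.
  rewrite (edist_sym C B) in H0. rewrite (edist_sym B A) in H0.
  rewrite (edist_sym A C) in H1. rewrite (edist_sym C B) in H1.
  fold la lb lc in H, H0, H1, h1, h2, h3.
  assert (x0 : 0 <= s - la) by (unfold s; lra).
  assert (y0 : 0 <= s - lb) by (unfold s; lra).
  assert (z0 : 0 <= s - lc) by (unfold s; lra).
  assert (sum : (s-la)+(s-lb)+(s-lc) = s) by (unfold s; lra).
  assert (sp : 0 < s) by (unfold s; lra).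
  destruct (Rlt_or_le 0 (s-la)).
  - assert (0 < la*(s-la)) by nra. nra.
  - destruct (Rlt_or_le 0 (s-lb)).
    + assert (0 < lb*(s-lb)) by nra. nra.
    + assert (0 < s - lc) by lra. assert (0 < lc*(s-lc)) by nra. nra.
Qed.

Lemma bary (A B C Z : pt) wa wb wc : wa+wb+wc <> 0 ->
 ((wa*fst A + wb*fst B + wc*fst C)/(wa+wb+wc) - fst Z)^2 + ((wa*snd A + wb*snd B + wc*snd C)/(wa+wb+wc) - snd Z)^2
 = (wa*((fst A - fst Z)^2 + (snd A - snd Z)^2) + wb*((fst B - fst Z)^2 + (snd B - snd Z)^2)
     + wc*((fst C - fst Z)^2 + (snd C - snd Z)^2))/(wa+wb+wc)
   - (wa*wb*((fst A-fst B)^2+(snd A - snd B)^2) + wb*wc*((fst B-fst C)^2+(snd B - snd C)^2)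
      + wc*wa*((fst C-fst A)^2+(snd C - snd A)^2))/(wa+wb+wc)^2.
Proof. intro h. field. exact h. Qed.

Lemma sqrt_eq_of_sq x y : 0 <= x -> 0 <= y -> x^2 = y^2 -> x = y.
Proof. intros hx hy h. destruct (sq_eq_cases _ _ h); [assumption|]. nra. Qed.

Lemma inv_alg rho vx vy wx wy d d' : 0 < d -> 0 < d' ->
  d^2 = vx^2 + vy^2 -> d'^2 = wx^2 + wy^2 ->
  ((rho/d)^2*vx - (rho/d')^2*wx)^2 + ((rho/d)^2*vy - (rho/d')^2*wy)^2
  = rho^4 * ((vx-wx)^2 + (vy-wy)^2) / (d^2 * d'^2).
Proof.
  intros hd hd' e e'.
  replace (((rho/d)^2*vx - (rho/d')^2*wx)^2 + ((rho/d)^2*vy - (rho/d')^2*wy)^2)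
    with ((rho/d)^4*(vx^2+vy^2) + (rho/d')^4*(wx^2+wy^2) - 2*(rho/d)^2*(rho/d')^2*(vx*wx+vy*wy)) by ring.
  replace ((vx-wx)^2 + (vy-wy)^2) with ((vx^2+vy^2) + (wx^2+wy^2) - 2*(vx*wx+vy*wy)) by ring.
  rewrite <- e, <- e'. field. split; lra.
Qed.

Lemma inv_dist a b rho P P' : 0 < edist P (f1 a b) -> 0 < edist P' (f1 a b) ->
  edist (focus_inv a b rho P) (focus_inv a b rho P') =
  rho^2 * edist P P' / (edist P (f1 a b) * edist P' (f1 a b)).
Proof.
  intros hd hd'.
  apply sqrt_eq_of_sq.
  - apply edist_nonneg.
  - apply Rmult_le_pos; [apply Rmult_le_pos; [apply pow2_ge_0|apply edist_nonneg]|].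
    apply Rlt_le, Rinv_0_lt_compat, Rmult_lt_0_compat; assumption.
  - rewrite edist_sq'. unfold focus_inv. cbn [fst snd].
    set (d := edist P (f1 a b)). set (d' := edist P' (f1 a b)).
    replace (fst (f1 a b) + (rho / d) ^ 2 * (fst P - fst (f1 a b)) -
      (fst (f1 a b) + (rho / d') ^ 2 * (fst P' - fst (f1 a b)))) with
      ((rho/d)^2*(fst P - fst (f1 a b)) - (rho/d')^2*(fst P' - fst (f1 a b))) by ring.
    replace (snd (f1 a b) + (rho / d) ^ 2 * (snd P - snd (f1 a b)) -
      (snd (f1 a b) + (rho / d') ^ 2 * (snd P' - snd (f1 a b)))) with
      ((rho/d)^2*(snd P - snd (f1 a b)) - (rho/d')^2*(snd P' - snd (f1 a b))) by ring.
    rewrite (inv_alg rho _ _ _ _ d d' hd hd' (edist_sq' P (f1 a b)) (edist_sq' P' (f1 a b))).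
    replace ((fst P - fst (f1 a b) - (fst P' - fst (f1 a b))) ^ 2 + (snd P - snd (f1 a b) - (snd P' - snd (f1 a b))) ^ 2)
      with ((edist P P')^2) by (rewrite edist_sq'; ring).
    field. split; unfold d, d'; lra.
Qed.

Lemma cfoc_sq a b : b < a -> 0 < b -> (cfoc a b)^2 = a^2 - b^2.
Proof. intros. unfold cfoc. rewrite pow2_sqrt; [reflexivity|nra]. Qed.

Lemma cfoc_pos a b : b < a -> 0 < b -> 0 < cfoc a b.
Proof. intros. unfold cfoc. apply sqrt_lt_R0. nra. Qed.

Lemma focal a b x y : 0 < b -> b < a -> on_ellipse a b (x,y) ->
  edist (x,y) (f1 a b) = a + cfoc a b * x / a.
Proof.
  intros hb hab he. unfold on_ellipse in he. cbn [fst snd] in he.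
  pose proof (cfoc_sq a b hab hb) as hc. pose proof (cfoc_pos a b hab hb) as hc0.
  set (c := cfoc a b) in *.
  assert (ha : 0 < a) by lra.
  assert (hx : x^2 <= a^2).
  { assert (0 <= y^2/b^2) by (apply Rle_mult_inv_pos; [apply pow2_ge_0|nra]).
    assert (x^2/a^2 <= 1) by lra.
    assert (x^2 = (x^2/a^2)*a^2) by (field; lra). nra. }
  assert (hy : y^2 = b^2*(1 - x^2/a^2)) by (rewrite <- he; field; split; lra).
  assert (hca : c < a) by nra.
  assert (pos : 0 < a + c*x/a).
  { assert (-a <= x <= a) by nra.
    assert (c*x/a >= -c) . { assert (c * x >= - c * a) by nra. assert (c*x/a = (c*x)/a) by reflexivity.
      apply Rle_ge. apply (Rmult_le_reg_r a); [lra|]. replace (c*x/a*a) with (c*x) by (field; lra). nra. }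
    lra. }
  apply sqrt_eq_of_sq; [apply edist_nonneg|lra|].
  rewrite edist_sq'. unfold f1. cbn [fst snd]. fold c.
  replace ((x - - c)^2 + (y - 0)^2) with ((x+c)^2 + y^2) by ring.
  rewrite hy. assert (hb2 : b^2 = a^2 - c^2) by lra. rewrite hb2. field. lra.
Qed.

Lemma powC a b rho x y : 0 < b -> b < a -> 0 < edist (x,y) (f1 a b) ->
  let Q := focus_inv a b rho (x,y) in
  let d := edist (x,y) (f1 a b) in
  let c := cfoc a b in
  (fst Q - fst (C9dag a b rho))^2 + (snd Q - snd (C9dag a b rho))^2
  = rho^4 * (1/d^2 + c*(x+c)/(b^2*d^2) + c^2/(4*b^4)).
Proof.
  intros hb hab hd Q d c.
  assert (hd2 : 0 < d) by exact hd.
  pose proof (edist_sq' (x,y) (f1 a b)) as e. fold d in e. unfold f1 in e. cbn [fst snd] in e. fold c in e.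
  unfold Q, focus_inv, C9dag. fold d. unfold f1. cbn [fst snd]. fold c.
  replace (- c + (rho / d) ^ 2 * (x - - c) - - c * (1 + rho ^ 2 / (2 * b ^ 2))) with
    (rho^2 * ((x+c)/d^2 + c/(2*b^2))) by (field; split; lra).
  replace (0 + (rho / d) ^ 2 * (y - 0) - 0) with (rho^2*(y/d^2)) by (field; lra).
  transitivity (rho^4*(((x+c)^2+y^2)/d^4 + c*(x+c)/(b^2*d^2) + c^2/(4*b^4))).
  { field. split; lra. }
  replace ((x+c)^2+y^2) with (d^2) by (rewrite e; ring). field. split; lra.
Qed.

Definition nn (m u : R) : R := 1 + m^2 - m^2*(3-m^2)*u^2.
Definition tt (m u : R) : R := (1+m^2)^2 - 4*m^2*u^2.
Definition rh (m u : R) : R := 1 + m*u.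
Definition muf (m u : R) : R := tt m u * rh m u / nn m u.
Definition Kp (m : R) : R := (1-m^2)*(3+m^2)^2.
Definition pih (m u : R) : R := Kp m + m*((3-m^2)*(1+m^2)*u+4*m)*(3+m^2) + m^2*(3-m^2)*(1-m^2)*(rh m u)^2.
Definition Ha (m s p : R) : R :=
  m^9*s*p + m^8*s^2 - 2*m^8*p - 4*m^7*s*p^2 - m^7*s*p + m^7*s - m^6*s^2 - 8*m^6*p^2 + 2*m^6*p + 2*m^6 - 4*m^5*s^3 + 12*m^5*s*p^2 + 7*m^5*s*p + 3*m^5*s - 9*m^4*s^2 + 24*m^4*p^2 + 18*m^4*p + 6*m^4 - 4*m^3*s^3 + 9*m^3*s*p + 3*m^3*s - 7*m^2*s^2 + 14*m^2*p + 6*m^2 + m*s + 2.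
Definition Hn (m s p : R) : R :=
  m^8*p^2 + m^6*s^2 - 6*m^6*p^2 - 2*m^6*p - 2*m^4*s^2 + 9*m^4*p^2 + 4*m^4*p + m^4 - 3*m^2*s^2 + 6*m^2*p + 2*m^2 + 1.
Definition Hb (m s p : R) : R :=
  m^10*p + m^9*s - 4*m^8*s^2*p + 8*m^8*p^2 + 4*m^8*p + m^8 - 4*m^7*s^3 + 8*m^7*s*p + 4*m^7*s - 8*m^6*s^2*p - 4*m^6*s^2 + 16*m^6*p^3 + 16*m^6*p^2 + 14*m^6*p + 4*m^6 - 8*m^5*s^3 + 16*m^5*s*p^2 + 16*m^5*s*p + 6*m^5*s - 4*m^4*s^2*p - 8*m^4*s^2 + 24*m^4*p^2 + 20*m^4*p + 6*m^4 - 4*m^3*s^3 + 8*m^3*s*p + 4*m^3*s - 4*m^2*s^2 + 9*m^2*p + 4*m^2 + m*s + 1.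
Definition Hc (m s p : R) : R :=
  m^19*s*p^3 + 2*m^18*s^2*p^2 + m^17*s^3*p - 4*m^17*s*p^4 - 5*m^17*s*p^3 + 3*m^17*s*p^2 - 8*m^16*s^2*p^3 - 15*m^16*s^2*p^2 + 4*m^16*s^2*p + 10*m^16*p^3 - 8*m^15*s^3*p^2 - 15*m^15*s^3*p + m^15*s^3 + 28*m^15*s*p^4 + 6*m^15*s*p^3 + 9*m^15*s*p^2 + 3*m^15*s*p - 8*m^14*s^4*p - 5*m^14*s^4 + 56*m^14*s^2*p^3 + 37*m^14*s^2*p^2 - 12*m^14*s^2*p + 2*m^14*s^2 + 40*m^14*p^4 - 34*m^14*p^3 + 10*m^14*p^2 - 4*m^13*s^5 + 40*m^13*s^3*p^2 + 40*m^13*s^3*p - 11*m^13*s^3 - 60*m^13*s*p^4 + 114*m^13*s*p^3 - 50*m^13*s*p^2 - 7*m^13*s*p + m^13*s + 24*m^12*s^4*p + 9*m^12*s^4 - 120*m^12*s^2*p^3 + 94*m^12*s^2*p^2 + 16*m^12*s^2*p - 17*m^12*s^2 - 216*m^12*p^4 - 4*m^12*p^3 - 74*m^12*p^2 - 10*m^12*p + 12*m^11*s^5 - 56*m^11*s^3*p^2 + 86*m^11*s^3*p + 24*m^11*s^3 + 36*m^11*s*p^4 - 567*m^11*s*p^3 - 106*m^11*s*p^2 - 78*m^11*s*p - 21*m^11*s + 8*m^10*s^4*p + 66*m^10*s^4 + 72*m^10*s^2*p^3 - 448*m^10*s^2*p^2 - 48*m^10*s^2*p - m^10*s^2 + 216*m^10*p^4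 - 268*m^10*p^3 - 68*m^10*p^2 - 46*m^10*p - 10*m^10 + 4*m^9*s^5 + 24*m^9*s^3*p^2 - 171*m^9*s^3*p + 94*m^9*s^3 + 531*m^9*s*p^3 - 189*m^9*s*p^2 - 74*m^9*s*p - 18*m^9*s - 24*m^8*s^4*p - 74*m^8*s^4 + 177*m^8*s^2*p^2 - 20*m^8*s^2*p + 98*m^8*s^2 + 216*m^8*p^4 + 762*m^8*p^3 + 228*m^8*p^2 + 36*m^8*p - 6*m^8 - 12*m^7*s^5 - 327*m^7*s^3*p - 155*m^7*s^3 + 432*m^7*s*p^3 + 1185*m^7*s*p^2 + 555*m^7*s*p + 118*m^7*s - 189*m^6*s^4 + 153*m^6*s^2*p^2 + 60*m^6*s^2*p + 44*m^6*s^2 + 558*m^6*p^3 + 954*m^6*p^2 + 396*m^6*p + 60*m^6 - 126*m^5*s^3*p - 339*m^5*s^3 + 684*m^5*s*p^2 + 849*m^5*s*p + 237*m^5*s - 63*m^4*s^4 - 81*m^4*s^2 + 486*m^4*p^2 + 486*m^4*p + 116*m^4 - 126*m^3*s^3 + 288*m^3*s*p + 159*m^3*s - 45*m^2*s^2 + 162*m^2*p + 78*m^2 + 36*m*s + 18.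
Definition Hd (m s p : R) : R :=
  m^28*s^2*p^4 - 2*m^28*p^5 + 3*m^27*s^3*p^3 - 7*m^27*s*p^4 + 3*m^26*s^4*p^2 - 6*m^26*s^2*p^4 - 6*m^26*s^2*p^3 - 16*m^26*p^6 + 12*m^26*p^5 + m^25*s^5*p - 23*m^25*s^3*p^3 + m^25*s^3*p^2 - 40*m^25*s*p^5 + 57*m^25*s*p^4 - 33*m^24*s^4*p^2 + 2*m^24*s^4*p + 16*m^24*s^2*p^6 - 46*m^24*s^2*p^4 + 86*m^24*s^2*p^3 + 4*m^24*s^2*p^2 - 32*m^24*p^7 + 128*m^24*p^6 - 4*m^24*p^5 + 6*m^24*p^4 + 4*m^24*p^3 - 21*m^23*s^5*p + 32*m^23*s^3*p^5 - 12*m^23*s^3*p^3 + 39*m^23*s^3*p^2 + 5*m^23*s^3*p - 48*m^23*s*p^6 + 360*m^23*s*p^5 - 80*m^23*s*p^4 + 40*m^23*s*p^3 + 6*m^23*s*p^2 - 5*m^22*s^6 + 48*m^22*s^4*p^4 + 48*m^22*s^4*p^2 - 12*m^22*s^4*p + m^22*s^4 - 160*m^22*s^2*p^6 - 96*m^22*s^2*p^5 + 474*m^22*s^2*p^4 - 248*m^22*s^2*p^3 + 46*m^22*s^2*p^2 + 6*m^22*s^2*p + 320*m^22*p^7 - 272*m^22*p^6 - 20*m^22*p^5 + 28*m^22*p^4 - 8*m^22*p^3 + 64*m^21*s^5*p^3 + 52*m^21*s^5*p - 10*m^21*s^5 - 320*m^21*s^3*p^5 - 176*m^21*s^3*p^4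 + 444*m^21*s^3*p^3 - 188*m^21*s^3*p^2 - m^21*s^3*p + 3*m^21*s^3 + 400*m^21*s*p^6 - 936*m^21*s*p^5 - 136*m^21*s*p^4 - 144*m^21*s*p^3 - 2*m^21*s*p^2 + 48*m^20*s^6*p^2 + 14*m^20*s^6 - 352*m^20*s^4*p^4 - 96*m^20*s^4*p^3 + 296*m^20*s^4*p^2 + 4*m^20*s^4*p - 13*m^20*s^4 + 576*m^20*s^2*p^6 + 288*m^20*s^2*p^5 - 1468*m^20*s^2*p^4 - 8*m^20*s^2*p^3 - 300*m^20*s^2*p^2 - 14*m^20*s^2*p + 3*m^20*s^2 - 1152*m^20*p^7 - 32*m^20*p^6 - 40*m^20*p^5 - 180*m^20*p^4 + 8*m^20*p^3 + 4*m^20*p^2 - 2*m^20*p + 32*m^19*s^7*p - 384*m^19*s^5*p^3 - 80*m^19*s^5*p^2 + 124*m^19*s^5*p + 20*m^19*s^5 + 1152*m^19*s^3*p^5 + 624*m^19*s^3*p^4 - 1070*m^19*s^3*p^3 + 156*m^19*s^3*p^2 - 100*m^19*s^3*p - 19*m^19*s^3 - 1056*m^19*s*p^6 + 40*m^19*s*p^5 - 150*m^19*s*p^4 - 48*m^19*s*p^3 - 112*m^19*s*p^2 - 8*m^19*s*p + m^19*s + 16*m^18*s^8 - 224*m^18*s^6*p^2 - 32*m^18*s^6*p + 30*m^18*s^6 + 832*m^18*s^4*p^4 - 128*m^18*s^4*p^3 - 738*m^18*s^4*p^2 + 148*m^18*s^4*p - 4*m^18*s^4 - 864*m^18*s^2*p^6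 + 1472*m^18*s^2*p^5 + 2118*m^18*s^2*p^4 + 332*m^18*s^2*p^3 + 196*m^18*s^2*p^2 - 88*m^18*s^2*p - 24*m^18*s^2 + 1728*m^18*p^7 + 272*m^18*p^6 - 428*m^18*p^5 + 204*m^18*p^4 - 56*m^18*p^3 - 40*m^18*p^2 - 4*m^18*p - 64*m^17*s^7*p + 48*m^17*s^7 + 512*m^17*s^5*p^3 - 464*m^17*s^5*p^2 - 578*m^17*s^5*p + 100*m^17*s^5 - 1728*m^17*s^3*p^5 + 1312*m^17*s^3*p^4 + 1238*m^17*s^3*p^3 + 654*m^17*s^3*p^2 + 180*m^17*s^3*p - 36*m^17*s^3 + 864*m^17*s*p^6 + 3784*m^17*s*p^5 + 1426*m^17*s*p^4 + 176*m^17*s*p^3 - 96*m^17*s*p^2 - 104*m^17*s*p - 23*m^17*s - 32*m^16*s^8 + 192*m^16*s^6*p^2 - 96*m^16*s^6*p - 42*m^16*s^6 - 672*m^16*s^4*p^4 + 1792*m^16*s^4*p^3 - 690*m^16*s^4*p^2 - 152*m^16*s^4*p + 244*m^16*s^4 + 432*m^16*s^2*p^6 - 5952*m^16*s^2*p^5 + 1374*m^16*s^2*p^4 + 2260*m^16*s^2*p^3 + 892*m^16*s^2*p^2 - 136*m^16*s^2*p - 86*m^16*s^2 - 864*m^16*p^7 + 384*m^16*p^6 + 1188*m^16*p^5 - 1032*m^16*p^4 - 720*m^16*p^3 - 280*m^16*p^2 - 68*m^16*p - 10*m^16 - 128*m^15*s^7*p - 176*m^15*s^7 + 384*m^15*s^5*p^3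 + 2208*m^15*s^5*p^2 + 42*m^15*s^5*p - 44*m^15*s^5 + 864*m^15*s^3*p^5 - 5664*m^15*s^3*p^4 + 500*m^15*s^3*p^3 - 30*m^15*s^3*p^2 + 878*m^15*s^3*p + 292*m^15*s^3 - 432*m^15*s*p^6 - 9096*m^15*s*p^5 - 2888*m^15*s*p^4 - 1760*m^15*s*p^3 - 1252*m^15*s*p^2 - 536*m^15*s*p - 96*m^15*s - 64*m^14*s^8 + 224*m^14*s^6*p^2 + 192*m^14*s^6*p - 460*m^14*s^6 + 144*m^14*s^4*p^4 - 192*m^14*s^4*p^3 + 4904*m^14*s^4*p^2 + 876*m^14*s^4*p + 310*m^14*s^4 + 3744*m^14*s^2*p^5 - 13218*m^14*s^2*p^4 - 7320*m^14*s^2*p^3 - 1888*m^14*s^2*p^2 + 260*m^14*s^2*p + 114*m^14*s^2 - 1008*m^14*p^6 - 3676*m^14*p^5 - 1580*m^14*p^4 - 1448*m^14*p^3 - 776*m^14*p^2 - 244*m^14*p - 36*m^14 + 64*m^13*s^7*p - 160*m^13*s^7 - 576*m^13*s^5*p^3 + 672*m^13*s^5*p^2 + 1636*m^13*s^5*p - 672*m^13*s^5 + 2448*m^13*s^3*p^4 - 4356*m^13*s^3*p^3 + 148*m^13*s^3*p^2 + 746*m^13*s^3*p + 554*m^13*s^3 + 1296*m^13*s*p^6 + 6408*m^13*s*p^5 - 6896*m^13*s*p^4 - 4016*m^13*s*p^3 - 932*m^13*s*p^2 - 40*m^13*s*p + 8*m^13*s + 32*m^12*s^8 - 240*m^12*s^6*p^2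 + 832*m^12*s^6*p + 138*m^12*s^6 - 3744*m^12*s^4*p^3 - 2448*m^12*s^4*p^2 - 804*m^12*s^4*p - 1038*m^12*s^4 + 2592*m^12*s^2*p^5 + 11403*m^12*s^2*p^4 - 1000*m^12*s^2*p^3 + 284*m^12*s^2*p^2 + 1804*m^12*s^2*p + 656*m^12*s^2 + 2592*m^12*p^6 + 7050*m^12*p^5 + 4564*m^12*p^4 + 3128*m^12*p^3 + 1168*m^12*p^2 + 216*m^12*p + 12*m^12 + 96*m^11*s^7*p + 544*m^11*s^7 - 2640*m^11*s^5*p^2 + 780*m^11*s^5*p - 228*m^11*s^5 + 432*m^11*s^3*p^4 - 5565*m^11*s^3*p^3 - 9396*m^11*s^3*p^2 - 4868*m^11*s^3*p - 906*m^11*s^3 + 9720*m^11*s*p^5 + 27189*m^11*s*p^4 + 19888*m^11*s*p^3 + 11392*m^11*s*p^2 + 4120*m^11*s*p + 650*m^11*s + 48*m^10*s^8 + 864*m^10*s^6*p + 1970*m^10*s^6 - 1728*m^10*s^4*p^3 - 11385*m^10*s^4*p^2 - 7332*m^10*s^4*p - 2692*m^10*s^4 + 7560*m^10*s^2*p^4 + 13386*m^10*s^2*p^3 + 5724*m^10*s^2*p^2 + 2280*m^10*s^2*p + 682*m^10*s^2 + 8208*m^10*p^5 + 18756*m^10*p^4 + 16088*m^10*p^3 + 8136*m^10*p^2 + 2260*m^10*p + 268*m^10 + 624*m^9*s^7 - 720*m^9*s^5*p^2 - 87*m^9*s^5*p + 1596*m^9*s^5 - 3447*m^9*s^3*p^3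 - 15975*m^9*s^3*p^2 - 12588*m^9*s^3*p - 3380*m^9*s^3 + 17325*m^9*s*p^4 + 34704*m^9*s*p^3 + 24816*m^9*s*p^2 + 9352*m^9*s*p + 1506*m^9*s + 288*m^8*s^6*p + 1938*m^8*s^6 - 4293*m^8*s^4*p^2 - 7242*m^8*s^4*p - 2220*m^8*s^4 + 4806*m^8*s^2*p^3 + 3216*m^8*s^2*p^2 - 72*m^8*s^2*p - 138*m^8*s^2 + 9954*m^8*p^4 + 18060*m^8*p^3 + 12632*m^8*p^2 + 4324*m^8*p + 600*m^8 + 144*m^7*s^7 + 99*m^7*s^5*p + 1788*m^7*s^5 - 6129*m^7*s^3*p^2 - 10251*m^7*s^3*p - 3660*m^7*s^3 + 12600*m^7*s*p^3 + 18126*m^7*s*p^2 + 9016*m^7*s*p + 1672*m^7*s + 513*m^6*s^6 - 1872*m^6*s^4*p - 687*m^6*s^4 + 18*m^6*s^2*p^2 - 1434*m^6*s^2*p - 682*m^6*s^2 + 5904*m^6*p^3 + 8040*m^6*p^2 + 3844*m^6*p + 660*m^6 + 522*m^5*s^5 - 2673*m^5*s^3*p - 1749*m^5*s^3 + 4374*m^5*s*p^2 + 4104*m^5*s*p + 1024*m^5*s - 45*m^4*s^4 - 558*m^4*s^2*p - 435*m^4*s^2 + 1836*m^4*p^2 + 1674*m^4*p + 404*m^4 - 315*m^3*s^3 + 720*m^3*s*p + 333*m^3*s - 90*m^2*s^2 + 288*m^2*p + 132*m^2 + 45*m*s + 18.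

Lemma Hn_eq m u2 u3 : Hn m (u2+u3) (u2*u3) = nn m u2 * nn m u3.
Proof. unfold Hn, nn. ring. Qed.

Lemma sig_a m u2 u3 : nn m u2 <> 0 -> nn m u3 <> 0 ->
  muf m u2 + muf m u3 = Ha m (u2+u3) (u2*u3) / Hn m (u2+u3) (u2*u3).
Proof. intros h2 h3. rewrite Hn_eq. unfold muf, Ha, tt, rh. unfold nn in *. field. split; assumption. Qed.

Lemma sig_b m u2 u3 : nn m u2 <> 0 -> nn m u3 <> 0 ->
  muf m u2 * muf m u3 = Hb m (u2+u3) (u2*u3) / Hn m (u2+u3) (u2*u3).
Proof. intros h2 h3. rewrite Hn_eq. unfold muf, Hb, tt, rh. unfold nn in *. field. split; assumption. Qed.

Lemma sig_c m u2 u3 : nn m u2 <> 0 -> nn m u3 <> 0 ->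
  muf m u2 * pih m u2 * (rh m u3)^2 + muf m u3 * pih m u3 * (rh m u2)^2 = Hc m (u2+u3) (u2*u3) / Hn m (u2+u3) (u2*u3).
Proof. intros h2 h3. rewrite Hn_eq. unfold muf, Hc, tt, pih, Kp, rh. unfold nn in *. field. split; assumption. Qed.

Lemma sig_d m u2 u3 : nn m u2 <> 0 -> nn m u3 <> 0 ->
  (muf m u2)^2 * pih m u2 * (rh m u3)^2 + (muf m u3)^2 * pih m u3 * (rh m u2)^2 = Hd m (u2+u3) (u2*u3) / (Hn m (u2+u3) (u2*u3))^2.
Proof. intros h2 h3. rewrite Hn_eq. unfold muf, Hd, tt, pih, Kp, rh. unfold nn in *. field. split; assumption. Qed.

Definition HaN (m u : R) : R :=
  (2 - 4*m^2 - 2*m^4 + 8*m^6 - 2*m^8 - 4*m^10 + 2*m^12) + (- m + 7*m^3 - 13*m^5 + 3*m^7 + 13*m^9 - 11*m^11 + m^13 + m^15)*u + (- 5*m^2 + 15*m^4 - 9*m^6 - 13*m^8 + 17*m^10 - 3*m^12 - 3*m^14 + m^16)*u^2 + (- 2*m^3 + 4*m^5 + 2*m^7 - 8*m^9 + 2*m^11 + 4*m^13 - 2*m^15)*u^3.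
Definition HbN (m u : R) : R :=
  (1 - 2*m^2 - 2*m^4 + 6*m^6 - 6*m^10 + 2*m^12 + 2*m^14 - m^16) + (- m + 4*m^3 - 4*m^5 - 4*m^7 + 10*m^9 - 4*m^11 - 4*m^13 + 4*m^15 - m^17)*u + (- 4*m^2 + 10*m^4 + 2*m^6 - 22*m^8 + 10*m^10 + 14*m^12 - 10*m^14 - 2*m^16 + 2*m^18)*u^2 + (2*m^3 - 8*m^5 + 8*m^7 + 8*m^9 - 20*m^11 + 8*m^13 + 8*m^15 - 8*m^17 + 2*m^19)*u^3 + (5*m^4 - 14*m^6 + 2*m^8 + 26*m^10 - 20*m^12 - 10*m^14 + 14*m^16 - 2*m^18 - m^20)*u^4 + (- m^5 + 4*m^7 - 4*m^9 - 4*m^11 + 10*m^13 - 4*m^15 - 4*m^17 + 4*m^19 - m^21)*u^5 + (- 2*m^6 + 6*m^8 - 2*m^10 - 10*m^12 + 10*m^14 + 2*m^16 - 6*m^18 + 2*m^20)*u^6.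
Definition HcN (m u : R) : R :=
  (18 - 12*m^2 - 112*m^4 + 92*m^6 + 258*m^8 - 248*m^10 - 272*m^12 + 312*m^14 + 118*m^16 - 188*m^18 + 44*m^22 - 10*m^24) + (- 36*m + 93*m^3 + 129*m^5 - 574*m^7 + 198*m^9 + 979*m^11 - 977*m^13 - 420*m^15 + 992*m^17 - 269*m^19 - 273*m^21 + 194*m^23 - 34*m^25 - 3*m^27 + m^29)*u + (- 99*m^2 + 117*m^4 + 560*m^6 - 682*m^8 - 1557*m^10 + 2631*m^12 + 754*m^14 - 3420*m^16 + 1427*m^18 + 1075*m^20 - 1092*m^22 + 294*m^24 + 5*m^26 - 15*m^28 + 2*m^30)*u^2 + (162*m^3 - 591*m^5 + 53*m^7 + 2418*m^9 - 3000*m^11 - 1865*m^13 + 6183*m^15 - 3236*m^17 - 2230*m^19 + 3279*m^21 - 1277*m^23 + 18*m^25 + 108*m^27 - 23*m^29 + m^31)*u^3 + (207*m^4 - 417*m^6 - 886*m^8 + 2338*m^10 + 1405*m^12 - 7435*m^14 + 5308*m^16 + 2988*m^18 - 6055*m^20 + 2905*m^22 - 102*m^24 - 366*m^26 + 123*m^28 - 13*m^30)*u^4 + (- 180*m^5 + 846*m^7 - 880*m^9 - 2116*m^11 + 6204*m^13 - 4798*m^15 - 2112*m^17 + 6088*m^19 - 3772*m^21 + 306*m^23 + 688*m^25 - 324*m^27 + 52*m^29 - 2*m^31)*u^5 + (- 180*m^6 + 636*m^8 - 132*m^10 - 2252*m^12 + 3360*m^14 - 296*m^16 - 3144*m^18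 + 2664*m^20 - 308*m^22 - 660*m^24 + 396*m^26 - 92*m^28 + 8*m^30)*u^6 + (- 24*m^9 + 128*m^11 - 232*m^13 + 64*m^15 + 336*m^17 - 448*m^19 + 112*m^21 + 192*m^23 - 184*m^25 + 64*m^27 - 8*m^29)*u^7.
Definition HdN (m u : R) : R :=
  (18 - 48*m^2 - 100*m^4 + 368*m^6 + 154*m^8 - 1216*m^10 + 208*m^12 + 2240*m^14 - 1148*m^16 - 2464*m^18 + 1960*m^20 + 1568*m^22 - 1820*m^24 - 448*m^26 + 976*m^28 - 64*m^30 - 278*m^32 + 80*m^34 + 28*m^36 - 16*m^38 + 2*m^40) + (- 45*m + 252*m^3 - 178*m^5 - 1452*m^7 + 2859*m^9 + 2032*m^11 - 9592*m^13 + 3088*m^15 + 14182*m^17 - 12664*m^19 - 8972*m^21 + 15768*m^23 - 402*m^25 - 9168*m^27 + 3656*m^29 + 2128*m^31 - 1753*m^33 + 92*m^35 + 238*m^37 - 76*m^39 + 7*m^41)*u + (- 126*m^2 + 285*m^4 + 1116*m^6 - 3174*m^8 - 3878*m^10 + 18077*m^12 - 5168*m^14 - 38952*m^16 + 40740*m^18 + 27162*m^20 - 64984*m^22 + 14332*m^24 + 39716*m^26 - 28798*m^28 - 4400*m^30 + 12056*m^32 - 3750*m^34 - 855*m^36 + 732*m^38 - 134*m^40 + 2*m^42 + m^44)*u^2 + (270*m^3 - 1905*m^5 + 3236*m^7 + 6398*m^9 - 25138*m^11 + 5495*m^13 + 70640*m^15 - 84216*m^17 - 53860*m^19 + 168222*m^21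 - 66536*m^23 - 107052*m^25 + 117004*m^27 - 9434*m^29 - 45200*m^31 + 25672*m^33 - 1386*m^35 - 3149*m^37 + 996*m^39 - 34*m^41 - 26*m^43 + 3*m^45)*u^3 + (423*m^4 - 1119*m^6 - 4372*m^8 + 17772*m^10 + 1393*m^12 - 84609*m^14 + 107392*m^16 + 82144*m^18 - 289098*m^20 + 156794*m^22 + 192248*m^24 - 290984*m^26 + 77298*m^28 + 103310*m^30 - 92832*m^32 + 20864*m^34 + 7283*m^36 - 4395*m^38 + 316*m^40 + 220*m^42 - 51*m^44 + 3*m^46)*u^4 + (- 468*m^5 + 4593*m^7 - 13404*m^9 + 270*m^11 + 68552*m^13 - 102419*m^15 - 79024*m^17 + 349928*m^19 - 255224*m^21 - 231310*m^23 + 492152*m^25 - 218540*m^27 - 149824*m^29 + 208018*m^31 - 75376*m^33 - 8600*m^35 + 13420*m^37 - 2275*m^39 - 764*m^41 + 334*m^43 - 40*m^45 + m^47)*u^5 + (- 837*m^6 + 3948*m^8 + 466*m^10 - 33812*m^12 + 54295*m^14 + 70640*m^16 - 305128*m^18 + 278320*m^20 + 179078*m^22 - 559256*m^24 + 361068*m^26 + 117672*m^28 - 299338*m^30 + 152240*m^32 + 1432*m^34 - 30608*m^36 + 9983*m^38 + 652*m^40 - 1006*m^42 + 204*m^44 - 13*m^46)*u^6 + (- 45*m^7 - 2400*m^9 + 16366*m^11 - 31176*m^13 - 26269*m^15 + 187840*m^17 - 246520*m^19 - 34784*m^21 + 416454*m^23 - 391296*m^25 - 16076*m^27 + 282960*m^29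 - 195330*m^31 + 13120*m^33 + 48584*m^35 - 25568*m^37 + 3335*m^39 + 1248*m^41 - 498*m^43 + 56*m^45 - m^47)*u^7 + (630*m^8 - 4926*m^10 + 12642*m^12 - 138*m^14 - 63272*m^16 + 121736*m^18 - 36440*m^20 - 174664*m^22 + 249556*m^24 - 56260*m^26 - 165732*m^28 + 169908*m^30 - 35208*m^32 - 45208*m^34 + 37576*m^36 - 10984*m^38 + 358*m^40 + 530*m^42 - 110*m^44 + 6*m^46)*u^8 + (612*m^9 - 3672*m^11 + 5716*m^13 + 9856*m^15 - 44208*m^17 + 42656*m^19 + 38224*m^21 - 115968*m^23 + 71416*m^25 + 50736*m^27 - 100008*m^29 + 46208*m^31 + 15248*m^33 - 27360*m^35 + 13072*m^37 - 2560*m^39 - 60*m^41 + 104*m^43 - 12*m^45)*u^9 + (216*m^10 - 1272*m^12 + 1984*m^14 + 2880*m^16 - 12896*m^18 + 10976*m^20 + 12864*m^22 - 31040*m^24 + 13840*m^26 + 17712*m^28 - 24000*m^30 + 6848*m^32 + 6048*m^34 - 5920*m^36 + 1984*m^38 - 192*m^40 - 40*m^42 + 8*m^44)*u^10.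
Definition HnN (m u : R) : R :=
  (1 - 3*m^2 + 2*m^4 + 2*m^6 - 3*m^8 + m^10).

Lemma Ha_ev m u : nn m u <> 0 ->
  Ha m (-(1-m^2)^2*u / nn m u) ((1+m^2)*(u^2-1) / nn m u) = HaN m u / (nn m u)^2.
Proof. intro h. unfold Ha, HaN. unfold nn in *. field. exact h. Qed.

Lemma Hb_ev m u : nn m u <> 0 ->
  Hb m (-(1-m^2)^2*u / nn m u) ((1+m^2)*(u^2-1) / nn m u) = HbN m u / (nn m u)^3.
Proof. intro h. unfold Hb, HbN. unfold nn in *. field. exact h. Qed.

Lemma Hc_ev m u : nn m u <> 0 ->
  Hc m (-(1-m^2)^2*u / nn m u) ((1+m^2)*(u^2-1) / nn m u) = HcN m u / (nn m u)^4.
Proof. intro h. unfold Hc, HcN. unfold nn in *. field. exact h. Qed.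

Lemma Hd_ev m u : nn m u <> 0 ->
  Hd m (-(1-m^2)^2*u / nn m u) ((1+m^2)*(u^2-1) / nn m u) = HdN m u / (nn m u)^6.
Proof. intro h. unfold Hd, HdN. unfold nn in *. field. exact h. Qed.

Lemma Hn_ev m u : nn m u <> 0 ->
  Hn m (-(1-m^2)^2*u / nn m u) ((1+m^2)*(u^2-1) / nn m u) = HnN m u / (nn m u)^1.
Proof. intro h. unfold Hn, HnN. unfold nn in *. field. exact h. Qed.

Lemma core m u1 u2 u3 :
  nn m u1 <> 0 -> nn m u2 <> 0 -> nn m u3 <> 0 -> 1 - m^2 <> 0 ->
  nn m u1 * (u2+u3) = -(1-m^2)^2*u1 -> nn m u1 * (u2*u3) = (1+m^2)*(u1^2-1) ->
  let mu1 := muf m u1 in let mu2 := muf m u2 in let mu3 := muf m u3 in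
  let S := mu1+mu2+mu3 in
  let w1 := mu1*(S - 2*mu1) in let w2 := mu2*(S - 2*mu2) in let w3 := mu3*(S - 2*mu3) in
  (1+m^2)*(w1+w2+w3)*(w1*pih m u1*(rh m u2*rh m u3)^2 + w2*pih m u2*(rh m u1 * rh m u3)^2
     + w3*pih m u3*(rh m u1*rh m u2)^2)
   = (3-m^2)*Kp m*(w1*w2*mu3^2 + w2*w3*mu1^2 + w3*w1*mu2^2).
Proof.
  intros h1 h2 h3 hm es ep mu1 mu2 mu3 S w1 w2 w3.
  assert (G : (1+m^2)*(w1+w2+w3)*(w1*pih m u1*(rh m u2*rh m u3)^2 + w2*pih m u2*(rh m u1 * rh m u3)^2
     + w3*pih m u3*(rh m u1*rh m u2)^2) - (3-m^2)*Kp m*(w1*w2*mu3^2 + w2*w3*mu1^2 + w3*w1*mu2^2)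
    = (1+m^2) * (mu1*((muf m u2 + muf m u3) - mu1) + (mu1 + (muf m u2 + muf m u3))*(muf m u2 + muf m u3)
                  - 2*((muf m u2 + muf m u3)^2 - 2*(muf m u2 * muf m u3)))
       * (mu1*((muf m u2 + muf m u3) - mu1) * pih m u1 * (1 + m*(u2+u3) + m^2*(u2*u3))^2
          + (rh m u1)^2 * ((mu1 + (muf m u2 + muf m u3)) *
               (muf m u2 * pih m u2 * (rh m u3)^2 + muf m u3 * pih m u3 * (rh m u2)^2)
             - 2 * ((muf m u2)^2 * pih m u2 * (rh m u3)^2 + (muf m u3)^2 * pih m u3 * (rh m u2)^2)))
     - (3-m^2)*Kp m * ((muf m u2 * muf m u3) * ((mu1 + (muf m u2 + muf m u3))^2
             - 2*(mu1 + (muf m u2 + muf m u3))*(muf m u2 + muf m u3) + 4*(muf m u2 * muf m u3)) * mu1^2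
          + mu1*((muf m u2 + muf m u3) - mu1) * (muf m u2 * muf m u3)
             * ((mu1 + (muf m u2 + muf m u3))*(muf m u2 + muf m u3) - 4*(muf m u2 * muf m u3)))).
  { unfold w1, w2, w3, S, mu1, mu2, mu3. unfold rh. ring. }
  rewrite (sig_a m u2 u3 h2 h3), (sig_b m u2 u3 h2 h3), (sig_c m u2 u3 h2 h3), (sig_d m u2 u3 h2 h3) in G.
  assert (Hs : u2 + u3 = -(1-m^2)^2*u1 / nn m u1) by (field_simplify; [lra|assumption] || (apply (Rmult_eq_reg_l (nn m u1)); [|assumption]; rewrite es; field; assumption)).
  assert (Hp : u2 * u3 = (1+m^2)*(u1^2-1) / nn m u1).
  { apply (Rmult_eq_reg_l (nn m u1)); [|assumption]. rewrite ep. field. assumption. }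
  assert (hHn : Hn m (u2+u3) (u2*u3) <> 0) by (rewrite Hn_eq; apply Rmult_integral_contrapositive; split; assumption).
  rewrite Hs, Hp in G, hHn.
  rewrite Ha_ev, Hb_ev, Hc_ev, Hd_ev, Hn_ev in G by exact h1.
  rewrite Hn_ev in hHn by exact h1.
  assert (hK : HnN m u1 <> 0).
  { intro hz. apply hHn. rewrite hz. field. exact h1. }
  apply Rminus_diag_uniq. rewrite G. clear G.
  unfold mu1. unfold muf, pih, Kp, rh, tt. unfold HaN, HbN, HcN, HdN.
  unfold HnN in *. unfold nn in *.
  clear w1 w2 w3 S mu1 mu2 mu3 Hs Hp es ep hHn.
  field. split; assumption.
Qed.

Lemma pow_pih j m u :
  0 < j -> 1 + m*u <> 0 -> 1 - m^2 <> 0 -> 3 - m^2 <> 0 -> 3 + m^2 <> 0 ->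
  let A2 := (3-m^2)*(1+m^2)/(4*j^2) in
  let c := m/j in let b2 := A2 - c^2 in
  let dl := (j^2*c^4 + A2 + b2)/2 in
  1/(A2*(rh m u)^2) + c*(A2*j*u + c)/(b2*(A2*(rh m u)^2)) + c^2/(4*b2^2)
   - (2*A2 - b2 - dl)^2/(4*A2*b2^2) = pih m u / (Kp m * A2 * (rh m u)^2).
Proof.
  intros hj hr h1 h3 h3' A2 c b2 dl.
  assert (e : b2 = (1-m^2)*(3+m^2)/(4*j^2)) by (unfold b2, A2, c; field; lra).
  assert (e2 : dl = (m^4 + 3)/(4*j^2)) by (unfold dl; rewrite e; unfold A2, c; field; lra).
  rewrite e2, e. unfold A2, c, pih, Kp, rh in *.
  assert (1 + m^2 <> 0) by nra.
  field. repeat split; try lra; nra.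
Qed.

Lemma onepm2 m : 1 + m^2 <> 0.
Proof. pose proof (pow2_ge_0 m). lra. Qed.

Lemma final_asm (Q1 Q2 Q3 C : pt) (R0 lam K0 m u1 u2 u3 : R) :
  0 < lam -> 0 <= R0 -> 0 < K0 ->
  edist Q2 Q3 = lam * muf m u1 -> edist Q3 Q1 = lam * muf m u2 -> edist Q1 Q2 = lam * muf m u3 ->
  0 < edist Q2 Q3 -> 0 < edist Q3 Q1 -> 0 < edist Q1 Q2 ->
  (fst Q1 - fst C)^2 + (snd Q1 - snd C)^2 = R0^2 + K0 * pih m u1/(rh m u1)^2 ->
  (fst Q2 - fst C)^2 + (snd Q2 - snd C)^2 = R0^2 + K0 * pih m u2/(rh m u2)^2 ->
  (fst Q3 - fst C)^2 + (snd Q3 - snd C)^2 = R0^2 + K0 * pih m u3/(rh m u3)^2 ->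
  lam^2 * (1+m^2) * (rh m u1 * rh m u2 * rh m u3)^2 = K0 * (3-m^2) * Kp m ->
  rh m u1 <> 0 -> rh m u2 <> 0 -> rh m u3 <> 0 ->
  nn m u1 <> 0 -> nn m u2 <> 0 -> nn m u3 <> 0 -> 1 - m^2 <> 0 ->
  nn m u1 * (u2+u3) = -(1-m^2)^2*u1 -> nn m u1 * (u2*u3) = (1+m^2)*(u1^2-1) ->
  edist (mittenpunkt Q1 Q2 Q3) C = R0.
Proof.
  intros hlam hR hK e1 e2 e3 p1 p2 p3 c1 c2 c3 hrel r1 r2 r3 n1 n2 n3 hm vs vp.
  pose proof (W_pos Q1 Q2 Q3 p1 p2 p3) as HW. cbv zeta in HW.
  pose proof (core m u1 u2 u3 n1 n2 n3 hm vs vp) as Hc. cbv zeta in Hc.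
  unfold mittenpunkt. cbv zeta.
  apply sqrt_eq_of_sq; [apply edist_nonneg|exact hR|].
  rewrite edist_sq'. cbn [fst snd].
  rewrite bary by lra.
  rewrite c1, c2, c3.
  rewrite <- (edist_sq' Q1 Q2), <- (edist_sq' Q2 Q3), <- (edist_sq' Q3 Q1).
  rewrite e1, e2, e3 in *.
  set (a1 := muf m u1) in *. set (a2 := muf m u2) in *. set (a3 := muf m u3) in *.
  set (q1 := pih m u1) in *. set (q2 := pih m u2) in *. set (q3 := pih m u3) in *.
  set (s1 := rh m u1) in *. set (s2 := rh m u2) in *. set (s3 := rh m u3) in *.
  set (w1 := lam * a1 * ((lam * a1 + lam * a2 + lam * a3) / 2 - lam * a1)) in *.
  set (w2 := lam * a2 * ((lam * a1 + lam * a2 + lam * a3) / 2 - lam * a2)) in *.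
  set (w3 := lam * a3 * ((lam * a1 + lam * a2 + lam * a3) / 2 - lam * a3)) in *.
  assert (key : w1 * w2 * (lam * a3) ^ 2 + w2 * w3 * (lam * a1) ^ 2 + w3 * w1 * (lam * a2) ^ 2
     = K0*(w1+w2+w3)*(w1*q1/s1^2 + w2*q2/s2^2 + w3*q3/s3^2)).
  { match type of Hc with ?L = ?R =>
      assert (I : K0*(w1+w2+w3)*(w1*q1/s1^2 + w2*q2/s2^2 + w3*q3/s3^2)
                 - (w1 * w2 * (lam * a3) ^ 2 + w2 * w3 * (lam * a1) ^ 2 + w3 * w1 * (lam * a2) ^ 2)
         = (lam^4*K0/(4*(1+m^2)*(s1*s2*s3)^2)) * (L - R)
           + (lam^4/4) * ((a1*(a1+a2+a3-2*a1))*(a2*(a1+a2+a3-2*a2))*a3^2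
                         + (a2*(a1+a2+a3-2*a2))*(a3*(a1+a2+a3-2*a3))*a1^2
                         + (a3*(a1+a2+a3-2*a3))*(a1*(a1+a2+a3-2*a1))*a2^2)
             * (K0*(3-m^2)*Kp m/((1+m^2)*(s1*s2*s3)^2) - lam^2))
    end.
    { unfold w1, w2, w3. field. pose proof (onepm2 m). repeat split; assumption. }
    rewrite Hc, Rminus_diag in I.
    assert (E2 : K0*(3-m^2)*Kp m/((1+m^2)*(s1*s2*s3)^2) - lam^2 = 0).
    { rewrite <- hrel. field. pose proof (onepm2 m). repeat split; assumption. }
    rewrite E2 in I. lra. }
  rewrite key. field. lra.
Qed.

Lemma vertex_data (a j m Xi Yi Xj Yj Xk Yk ui : R) :
  0 < a -> 0 < j ->
  4*j^2*a^2 = (3-m^2)*(1+m^2) ->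
  Xi^2+Yi^2 = 1 -> Xj^2+Yj^2 = 1 -> Xk^2+Yk^2 = 1 ->
  (Xj <> Xk \/ Yj <> Yk) ->
  ((1-m^2)*Xi)^2 + ((1+m^2)*Yi)^2 <> 0 ->
  (1-m^2)*(Xi*Xj) + (1+m^2)*(Yi*Yj) = (m^4-1)/2 ->
  (1-m^2)*(Xi*Xk) + (1+m^2)*(Yi*Yk) = (m^4-1)/2 ->
  Xi = j*a*ui ->
  nn m ui <> 0 /\
  1 - (Xj*Xk + Yj*Yk) = 2*(j^2*a^2)*tt m ui/((1+m^2)*nn m ui) /\
  nn m ui * ((Xj + Xk)/(j*a)) = -(1-m^2)^2*ui /\
  nn m ui * ((Xj/(j*a))*(Xk/(j*a))) = (1+m^2)*(ui^2-1).
Proof.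
  intros ha hj hT ci cj ck hn hN pij pik hu.
  destruct (vieta ((1-m^2)*Xi) ((1+m^2)*Yi) ((m^4-1)/2) Xj Yj Xk Yk cj ck) as [v1 [v2 v3]];
    [rewrite <- pij; ring | rewrite <- pik; ring | exact hn | exact hN |].
  set (N := ((1-m^2)*Xi)^2 + ((1+m^2)*Yi)^2) in *.
  pose proof (onepm2 m) as h1m.
  assert (hNe : N = (1+m^2) * nn m ui).
  { assert (E : N - (1+m^2) * nn m ui = (1+m^2)^2*(Xi^2+Yi^2-1) - m^2*ui^2*(4*j^2*a^2 - (3-m^2)*(1+m^2))).
    { unfold N, nn. rewrite hu. ring. }
    rewrite ci, hT in E. lra. }
  assert (hnn : nn m ui <> 0).
  { intro h0. apply hN. rewrite hNe, h0. ring. }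
  assert (hja : j*a <> 0) by (apply Rmult_integral_contrapositive; split; lra).
  assert (hKa : N - ((m^4-1)/2)^2 = (j^2*a^2) * tt m ui).
  { assert (E : N - ((m^4-1)/2)^2 - (j^2*a^2) * tt m ui =
       (1+m^2)^2*(Xi^2+Yi^2-1) - (1+m^2)^2/4 * (4*j^2*a^2 - (3-m^2)*(1+m^2))).
    { unfold N, tt. rewrite hu. field. }
    rewrite ci, hT in E. lra. }
  split; [exact hnn|]. split; [|split].
  - assert (E : N * (Xj*Xk + Yj*Yk) = 2*((m^4-1)/2)^2 - N).
    { replace (N * (Xj*Xk + Yj*Yk)) with (N*(Xj*Xk) + N*(Yj*Yk)) by ring. rewrite v1, v2. unfold N. ring. }
    assert (hN0 : N <> 0) by exact hN.
    assert (E2 : 1 - (Xj*Xk + Yj*Yk) = 2*(N - ((m^4-1)/2)^2)/N).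
    { apply (Rmult_eq_reg_l N); [|exact hN0]. replace (N * (1 - (Xj * Xk + Yj * Yk))) with (N - N * (Xj * Xk + Yj * Yk)) by ring.
      rewrite E. field. exact hN0. }
    rewrite E2, hKa, hNe. field. split; assumption.
  - assert (E : (1+m^2) * nn m ui * (Xj + Xk) = 2 * ((m^4-1)/2) * ((1-m^2)*Xi)) by (rewrite <- hNe; exact v3).
    rewrite hu in E.
    apply (Rmult_eq_reg_l (1+m^2)); [|exact h1m].
    replace ((1 + m ^ 2) * (nn m ui * ((Xj + Xk) / (j * a)))) with ((1 + m ^ 2) * nn m ui * (Xj + Xk) / (j*a)) by (field; split; intro; apply hja; subst; ring).
    rewrite E. field. split; lra.
  - assert (E : (1+m^2) * nn m ui * (Xj * Xk) = ((m^4-1)/2)^2 - ((1+m^2)*Yi)^2) by (rewrite <- hNe; exact v1).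
    assert (hY : Yi^2 = 1 - Xi^2) by lra.
    replace (((1+m^2)*Yi)^2) with ((1+m^2)^2*Yi^2) in E by ring. rewrite hY, hu in E.
    assert (hT' : j^2*a^2 = (3-m^2)*(1+m^2)/4) by lra.
    assert (E' : (1+m^2) * nn m ui * (Xj * Xk) = (1+m^2)^2*(j^2*a^2)*(ui^2-1)).
    { rewrite E. replace ((j*a*ui)^2) with (j^2*a^2*ui^2) by ring. rewrite hT'. field. }
    apply (Rmult_eq_reg_l ((1+m^2)*(j^2*a^2))).
    2:{ apply Rmult_integral_contrapositive; split; [exact h1m|]. rewrite <- Rpow_mult_distr. apply pow_nonzero. exact hja. }
    replace ((1 + m ^ 2) * (j ^ 2 * a ^ 2) * (nn m ui * (Xj / (j * a) * (Xk / (j * a))))) with ((1 + m ^ 2) * nn m ui * (Xj * Xk)) by (field; split; intro; apply hja; subst; ring).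
    rewrite E'. ring.
Qed.

Lemma pow_pih2 a b c j m u dl :
  0 < j -> 0 < a -> a^2 = (3-m^2)*(1+m^2)/(4*j^2) -> c = m/j -> b^2 = a^2 - c^2 ->
  dl = (j^2*c^4 + a^2 + b^2)/2 ->
  1 + m*u <> 0 -> 1 - m^2 <> 0 -> 3 - m^2 <> 0 ->
  1/(a^2*(rh m u)^2) + c*(a^2*j*u + c)/(b^2*(a^2*(rh m u)^2)) + c^2/(4*(b^2)^2)
   - (2*a^2 - b^2 - dl)^2/(4*a^2*(b^2)^2) = pih m u / (Kp m * a^2 * (rh m u)^2).
Proof.
  intros hj ha ha2 hc hb2 hd hr h1 h3.
  assert (h3' : 3 + m^2 <> 0) by (pose proof (pow2_ge_0 m); lra).
  rewrite hd. rewrite hb2. rewrite ha2. rewrite hc.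
  unfold pih, Kp, rh in *.
  pose proof (onepm2 m).
  field. repeat split; try lra; try nra.
Qed.

Lemma focal_pos a b x y : 0 < b -> b < a -> on_ellipse a b (x,y) -> 0 < a + cfoc a b * x / a.
Proof.
  intros hb hab he. unfold on_ellipse in he. cbn [fst snd] in he.
  pose proof (cfoc_sq a b hab hb) as hc. pose proof (cfoc_pos a b hab hb) as hc0.
  set (c := cfoc a b) in *.
  assert (ha : 0 < a) by lra.
  assert (hx : x^2 <= a^2).
  { assert (0 <= y^2/b^2) by (apply Rle_mult_inv_pos; [apply pow2_ge_0|nra]).
    assert (x^2/a^2 <= 1) by lra.
    assert (x^2 = (x^2/a^2)*a^2) by (field; lra). nra. }
  assert (hca : c < a) by nra.
  assert (-a <= x <= a) by nra.
  assert (c*x/a >= -c) . { apply Rle_ge. apply (Rmult_le_reg_r a); [lra|]. replace (c*x/a*a) with (c*x) by (field; lra). nra. }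
  lra.
Qed.

Lemma gf_XY a b x y x' y' : 0 < a -> 0 < b -> gf a b (x,y) (x',y') = (x/a)*(x'/a) + (y/b)*(y'/b).
Proof. intros. unfold gf. cbn [fst snd]. field. split; lra. Qed.

Lemma dsq_XY a b x y x' y' : 0 < a -> 0 < b ->
  (edist (x,y) (x',y'))^2 = a^2*(x/a - x'/a)^2 + b^2*(y/b - y'/b)^2.
Proof. intros. rewrite edist_sq. cbn [fst snd]. field. split; lra. Qed.

Lemma dist_XY a b x y x' y' : 0 < a -> 0 < b -> (x,y) <> (x',y') -> (x/a <> x'/a \/ y/b <> y'/b).
Proof.
  intros ha hb h. destruct (Req_dec (x/a) (x'/a)) as [e|e]; [|left; exact e].
  destruct (Req_dec (y/b) (y'/b)) as [e'|e']; [|right; exact e'].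
  exfalso. apply h. f_equal.
  - apply (Rmult_eq_reg_r (/a)); [exact e|]. apply Rinv_neq_0_compat; lra.
  - apply (Rmult_eq_reg_r (/b)); [exact e'|]. apply Rinv_neq_0_compat; lra.
Qed.

Lemma gf_sym a b p q : gf a b p q = gf a b q p.
Proof. unfold gf. rewrite (Rmult_comm (fst p)), (Rmult_comm (snd p)). reflexivity. Qed.

Lemma N_nonzero M ka X Y X' Y' : X^2 + Y^2 = 1 -> 0 <= M -> ~ (ka = 0 /\ M = 1) ->
  (1-M)*(X*X') + (1+M)*(Y*Y') = ka -> ((1-M)*X)^2 + ((1+M)*Y)^2 <> 0.
Proof.
  intros c hM hk p h0.
  assert (a1 : ((1-M)*X)^2 = 0) by (pose proof (pow2_ge_0 ((1-M)*X)); pose proof (pow2_ge_0 ((1+M)*Y)); lra).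
  assert (a2 : ((1+M)*Y)^2 = 0) by (pose proof (pow2_ge_0 ((1-M)*X)); pose proof (pow2_ge_0 ((1+M)*Y)); lra).
  assert (b1 : (1-M)*X = 0) by (destruct (Req_dec ((1-M)*X) 0) as [hh|hh]; [assumption|]; pose proof (sq_pos_neq _ hh); lra).
  assert (b2 : (1+M)*Y = 0) by (destruct (Req_dec ((1+M)*Y) 0) as [hh|hh]; [assumption|]; pose proof (sq_pos_neq _ hh); lra).
  assert (Y = 0). { destruct (Rmult_integral _ _ b2); [lra|assumption]. }
  subst Y. assert (X <> 0) by (intro; subst; lra).
  assert (M = 1). { destruct (Rmult_integral _ _ b1); [lra|contradiction]. }
  apply hk. split; [|assumption].
  rewrite <- p. replace ((1-M)*(X*X')) with (((1-M)*X)*X') by ring. rewrite b1. ring.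
Qed.

Lemma cvt a b c j m u x rho dl :
  0 < j -> 0 < a -> 0 < b -> a^2 = (3-m^2)*(1+m^2)/(4*j^2) -> c = m/j -> b^2 = a^2 - c^2 ->
  dl = (j^2*c^4 + a^2 + b^2)/2 -> 1 + m*u <> 0 -> 1 - m^2 <> 0 -> 3 - m^2 <> 0 ->
  x = a^2*j*u ->
  rho^4*(1/(a*rh m u)^2 + c*(x+c)/(b^2*(a*rh m u)^2) + c^2/(4*b^4))
  = (rho^2*(2*a^2-b^2-dl)/(2*a*b^2))^2 + rho^4/(Kp m * a^2) * pih m u/(rh m u)^2.
Proof.
  intros hj ha hb ha2 hc hb2 hd hr h1 h3 hx.
  pose proof (pow_pih2 a b c j m u dl hj ha ha2 hc hb2 hd hr h1 h3) as P.
  assert (hK : Kp m <> 0).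
  { unfold Kp. apply Rmult_integral_contrapositive; split; [exact h1|]. apply pow_nonzero. pose proof (pow2_ge_0 m). lra. }
  assert (hrh : rh m u <> 0) by (unfold rh; exact hr).
  rewrite hx.
  transitivity (rho^4 * ((1/(a^2*(rh m u)^2) + c*(a^2*j*u + c)/(b^2*(a^2*(rh m u)^2)) + c^2/(4*(b^2)^2)
   - (2*a^2 - b^2 - dl)^2/(4*a^2*(b^2)^2)) + (2*a^2 - b^2 - dl)^2/(4*a^2*(b^2)^2))).
  { field. repeat split; lra. }
  rewrite P. field. repeat split; lra.
Qed.

Lemma main_first a b rho : 0 < b -> b < a -> 0 < rho ->
  forall P1 P2 P3 : pt, three_periodic a b P1 P2 P3 ->
     edist (mittenpunkt (focus_inv a b rho P1) (focus_inv a b rho P2)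
                       (focus_inv a b rho P3))
          (C9dag a b rho) = R9dag a b rho.
Proof.
  intros hb hab hrho [x1 y1] [x2 y2] [x3 y3] Htp.
  destruct Htp as (d12 & d23 & d13 & e1 & e2 & e3 & nb1 & nb2 & nb3).
  assert (ha : 0 < a) by lra.
  pose proof (vertex_lemma a b _ _ _ ha hb e1 e2 e3 d12 d13 d23 nb1) as V1.
  assert (d21 : (x2,y2) <> (x1,y1)) by (intro h; apply d12; symmetry; exact h).
  assert (d31 : (x3,y3) <> (x1,y1)) by (intro h; apply d13; symmetry; exact h).
  assert (d32 : (x3,y3) <> (x2,y2)) by (intro h; apply d23; symmetry; exact h).
  pose proof (vertex_lemma a b _ _ _ ha hb e2 e3 e1 d23 d21 d31 nb2) as V2.
  pose proof (edist_pos _ _ d12) as p12. pose proof (edist_pos _ _ d13) as p13. pose proof (edist_pos _ _ d23) as p23.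
  rewrite (gf_sym a b (x2,y2) (x1,y1)), (edist_sym (x2,y2) (x1,y1)) in V2.
  set (J := (gf a b (x1, y1) (x2, y2) - 1) / edist (x1, y1) (x2, y2)) in *.
  assert (hJ12 : gf a b (x1, y1) (x2, y2) - 1 = J * edist (x1, y1) (x2, y2)) by (unfold J; field; lra).
  assert (hJ13 : gf a b (x1, y1) (x3, y3) - 1 = J * edist (x1, y1) (x3, y3)) by (rewrite V1; field; lra).
  assert (hJ23 : gf a b (x2, y2) (x3, y3) - 1 = J * edist (x2, y2) (x3, y3)) by (rewrite <- V2; field; lra).
  clear V1 V2.
  rewrite gf_XY in hJ12, hJ13, hJ23 by assumption.
  pose proof (circ a b x1 y1 ha hb e1) as c1. pose proof (circ a b x2 y2 ha hb e2) as c2. pose proof (circ a b x3 y3 ha hb e3) as c3.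
  pose proof (dist_XY a b _ _ _ _ ha hb d12) as D12. pose proof (dist_XY a b _ _ _ _ ha hb d13) as D13.
  pose proof (dist_XY a b _ _ _ _ ha hb d23) as D23.
  pose proof (dsq_XY a b x1 y1 x2 y2 ha hb) as s12. pose proof (dsq_XY a b x1 y1 x3 y3 ha hb) as s13.
  pose proof (dsq_XY a b x2 y2 x3 y3 ha hb) as s23.
  set (X1 := x1/a) in *. set (X2 := x2/a) in *. set (X3 := x3/a) in *.
  set (Y1 := y1/b) in *. set (Y2 := y2/b) in *. set (Y3 := y3/b) in *.
  pose proof (pair_rel a b _ _ _ _ J _ c1 c2 D12 s12 hJ12) as R12.
  pose proof (pair_rel a b _ _ _ _ J _ c1 c3 D13 s13 hJ13) as R13.
  pose proof (pair_rel a b _ _ _ _ J _ c2 c3 D23 s23 hJ23) as R23.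
  assert (hJneg : J < 0).
  { pose proof (one_minus_g_pos _ _ _ _ c1 c2 D12). destruct (Rlt_or_le J 0); [assumption|].
    assert (0 <= J * edist (x1,y1) (x2,y2)) by (apply Rmult_le_pos; lra). lra. }
  set (M := J^2*(a^2-b^2)) in *. set (ka := 1 - J^2*(a^2+b^2)) in *.
  assert (hq : 0 < J^2) by (apply sq_pos_neq; lra).
  assert (hab2 : 0 < a^2 - b^2) by (clear - hb hab; nra).
  assert (hb2 : 0 < b^2) by (clear - hb; nra).
  assert (hM : 0 <= M) by (unfold M; apply Rmult_le_pos; lra).
  assert (hk : ~ (ka = 0 /\ M = 1)).
  { intros [h1 h2]. unfold ka, M in *.
    assert (E : J^2*(a^2+b^2) - J^2*(a^2-b^2) = 2*(J^2*b^2)) by ring.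
    assert (0 < J^2*b^2) by (apply Rmult_lt_0_compat; lra). lra. }
  assert (R31 : (1-M)*(X3*X1) + (1+M)*(Y3*Y1) = ka) by (rewrite <- R13; ring).
  pose proof (N_nonzero M ka _ _ _ _ c1 hM hk R12) as N1.
  pose proof (N_nonzero M ka _ _ _ _ c2 hM hk R23) as N2.
  pose proof (N_nonzero M ka _ _ _ _ c3 hM hk R31) as N3.
  pose proof (closure M ka X1 Y1 X2 Y2 X3 Y3 c1 c2 c3 hM hk D12 D13 D23 N1 N2 N3 R12 R13 R23) as Br.
  assert (Qd : (J^2)^2*(a^2-b^2)^2 + 2*J^2*(a^2+b^2) - 3 = 0).
  { assert (E : (1-M)^2*(ka+1+M) - (1+M)^2*(ka+1-M) = 2*J^2*(a^2-b^2)*((J^2)^2*(a^2-b^2)^2 + 2*J^2*(a^2+b^2) - 3))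
      by (unfold M, ka; ring).
    rewrite Br in E.
    assert (0 < 2*J^2*(a^2-b^2)) by (apply Rmult_lt_0_compat; [apply Rmult_lt_0_compat|]; lra).
    apply (Rmult_eq_reg_l (2*J^2*(a^2-b^2))); lra. }
  clear Br.
  set (j := -J) in *. assert (hj : 0 < j) by (unfold j; lra).
  assert (hj2 : j^2 = J^2) by (unfold j; ring).
  pose proof (cfoc_sq a b hab hb) as hc2. pose proof (cfoc_pos a b hab hb) as hc0.
  set (c := cfoc a b) in *.
  set (m := j*c).
  assert (hm0 : 0 < m) by (unfold m; apply Rmult_lt_0_compat; lra).
  assert (hm2 : m^2 = M) by (unfold m, M; rewrite <- hj2, <- hc2; ring).
  assert (hT : 4*j^2*a^2 = (3-m^2)*(1+m^2)).
  { rewrite hm2. unfold M. rewrite hj2.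
    assert (E : 4*J^2*a^2 - (3 - J^2*(a^2-b^2))*(1 + J^2*(a^2-b^2)) =
      (J ^ 2) ^ 2 * (a ^ 2 - b ^ 2) ^ 2 + 2 * J ^ 2 * (a ^ 2 + b ^ 2) - 3) by ring.
    rewrite Qd in E. lra. }
  assert (hka : ka = (m^4-1)/2).
  { unfold ka. replace (m^4) with ((m^2)^2) by ring. rewrite hm2. unfold M.
    assert (E : 1 - J^2*(a^2+b^2) - ((J^2*(a^2-b^2))^2 - 1)/2 =
      -((J ^ 2) ^ 2 * (a ^ 2 - b ^ 2) ^ 2 + 2 * J ^ 2 * (a ^ 2 + b ^ 2) - 3)/2) by field.
    rewrite Qd in E. lra. }
  assert (hMlt : m^2 < 1).
  { assert (E : 4*j^2*b^2 = (1-m^2)*(3+m^2)).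
    { replace (4*j^2*b^2) with (4*j^2*a^2 - 4*(j^2*(a^2-b^2))) by ring. rewrite hT.
      rewrite hj2. fold M. rewrite <- hm2. ring. }
    assert (0 < 4*j^2*b^2) by (apply Rmult_lt_0_compat; [apply Rmult_lt_0_compat; [lra|apply sq_pos_neq; lra]|lra]).
    assert (0 <= m^2) by apply pow2_ge_0. clear - E H H0. nra. }
  rewrite <- hm2 in R12, R13, R23, R31, N1, N2, N3. rewrite hka in R12, R13, R23, R31.
  assert (R21 : (1-m^2)*(X2*X1) + (1+m^2)*(Y2*Y1) = (m^4-1)/2) by (rewrite <- R12; ring).
  assert (R32 : (1-m^2)*(X3*X2) + (1+m^2)*(Y3*Y2) = (m^4-1)/2) by (rewrite <- R23; ring).
  assert (hjn : j <> 0) by (clear - hj; lra). assert (han : a <> 0) by (clear - ha; lra).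
  assert (hja : j*a <> 0) by (apply Rmult_integral_contrapositive; split; assumption).
  set (u1 := X1/(j*a)). set (u2 := X2/(j*a)). set (u3 := X3/(j*a)).
  assert (hu1 : X1 = j*a*u1) by (unfold u1; field; repeat split; assumption).
  assert (hu2 : X2 = j*a*u2) by (unfold u2; field; repeat split; assumption).
  assert (hu3 : X3 = j*a*u3) by (unfold u3; field; repeat split; assumption).
  assert (D31 : X3 <> X1 \/ Y3 <> Y1) by (destruct D13; [left|right]; congruence).
  destruct (vertex_data a j m X1 Y1 X2 Y2 X3 Y3 u1 ha hj hT c1 c2 c3 D23 N1 R12 R13 hu1) as (nn1 & g23 & vs & vp).
  destruct (vertex_data a j m X2 Y2 X3 Y3 X1 Y1 u2 ha hj hT c2 c3 c1 D31 N2 R23 R21 hu2) as (nn2 & g31 & _ & _).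
  destruct (vertex_data a j m X3 Y3 X1 Y1 X2 Y2 u3 ha hj hT c3 c1 c2 D12 N3 R31 R32 hu3) as (nn3 & g12 & _ & _).
  replace ((X2 + X3)/(j*a)) with (u2+u3) in vs by (unfold u2, u3; field; repeat split; assumption).
  clear nb1 nb2 nb3 R12 R13 R23 R31 R21 R32 N1 N2 N3 D12 D13 D23 D31 s12 s13 s23 hk hM d21 d31 d32 hka.
  assert (hJj : J = -j) by (unfold j; ring).
  rewrite hJj in hJ12, hJ13, hJ23.
  assert (hd23 : edist (x2,y2) (x3,y3) = 2*j*a^2*tt m u1/((1+m^2)*nn m u1)).
  { apply (Rmult_eq_reg_l j); [|exact hjn].
    replace (j * edist (x2, y2) (x3, y3)) with (1 - (X2 * X3 + Y2 * Y3)) by (rewrite <- (Rplus_0_r (j * _)); lra).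
    rewrite g23. field. split; [exact nn1|exact (onepm2 m)]. }
  assert (hd13 : edist (x1,y1) (x3,y3) = 2*j*a^2*tt m u2/((1+m^2)*nn m u2)).
  { apply (Rmult_eq_reg_l j); [|exact hjn].
    replace (j * edist (x1, y1) (x3, y3)) with (1 - (X3 * X1 + Y3 * Y1)) by (rewrite <- (Rplus_0_r (j * _)); lra).
    rewrite g31. field. split; [exact nn2|exact (onepm2 m)]. }
  assert (hd12 : edist (x1,y1) (x2,y2) = 2*j*a^2*tt m u3/((1+m^2)*nn m u3)).
  { apply (Rmult_eq_reg_l j); [|exact hjn].
    replace (j * edist (x1, y1) (x2, y2)) with (1 - (X1 * X2 + Y1 * Y2)) by (rewrite <- (Rplus_0_r (j * _)); lra).
    rewrite g12. field. split; [exact nn3|exact (onepm2 m)]. }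
  clear hJ12 hJ13 hJ23 g12 g23 g31.
  assert (hx1 : cfoc a b * x1 / a = m*a*u1) by (fold c; replace (c*x1/a) with (c*X1) by (unfold X1; field; exact han); rewrite hu1; unfold m; ring).
  assert (hx2 : cfoc a b * x2 / a = m*a*u2) by (fold c; replace (c*x2/a) with (c*X2) by (unfold X2; field; exact han); rewrite hu2; unfold m; ring).
  assert (hx3 : cfoc a b * x3 / a = m*a*u3) by (fold c; replace (c*x3/a) with (c*X3) by (unfold X3; field; exact han); rewrite hu3; unfold m; ring).
  assert (hr1 : edist (x1,y1) (f1 a b) = a * rh m u1) by (rewrite (focal a b x1 y1 hb hab e1), hx1; unfold rh; ring).
  assert (hr2 : edist (x2,y2) (f1 a b) = a * rh m u2) by (rewrite (focal a b x2 y2 hb hab e2), hx2; unfold rh; ring).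
  assert (hr3 : edist (x3,y3) (f1 a b) = a * rh m u3) by (rewrite (focal a b x3 y3 hb hab e3), hx3; unfold rh; ring).
  assert (rp1 : 0 < rh m u1).
  { pose proof (focal_pos a b x1 y1 hb hab e1) as F. rewrite hx1 in F. unfold rh.
    assert (0 < a*(1+m*u1)) by (replace (a*(1+m*u1)) with (a + m*a*u1) by ring; exact F).
    clear - H ha. nra. }
  assert (rp2 : 0 < rh m u2).
  { pose proof (focal_pos a b x2 y2 hb hab e2) as F. rewrite hx2 in F. unfold rh.
    assert (0 < a*(1+m*u2)) by (replace (a*(1+m*u2)) with (a + m*a*u2) by ring; exact F).
    clear - H ha. nra. }
  assert (rp3 : 0 < rh m u3).
  { pose proof (focal_pos a b x3 y3 hb hab e3) as F. rewrite hx3 in F. unfold rh.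
    assert (0 < a*(1+m*u3)) by (replace (a*(1+m*u3)) with (a + m*a*u3) by ring; exact F).
    clear - H ha. nra. }
  assert (han2 : a^2 = (3-m^2)*(1+m^2)/(4*j^2)) by (rewrite <- hT; field; exact hjn).
  assert (hcm : c = m/j) by (unfold m; field; exact hjn).
  assert (hbc : b^2 = a^2 - c^2) by (rewrite hc2; ring).
  assert (hdl : delta a b = (j^2*c^4 + a^2 + b^2)/2).
  { unfold delta. apply sqrt_eq_of_sq.
    - apply sqrt_pos.
    - assert (0 <= j^2*c^4) by (apply Rmult_le_pos; [apply pow2_ge_0|]; replace (c^4) with ((c^2)^2) by ring; apply pow2_ge_0).
      assert (0 < a^2) by (clear - ha; nra). clear - H H0 hb2. lra.
    - rewrite pow2_sqrt.
      2:{ assert (E: a^4 - a^2*b^2 + b^4 = (a^2 - b^2/2)^2 + 3/4*(b^2)^2) by field. rewrite E.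
          pose proof (pow2_ge_0 (a^2 - b^2/2)). pose proof (pow2_ge_0 (b^2)). clear - H H0. lra. }
      replace (c^4) with ((c^2)^2) by ring. rewrite hc2, hj2.
      assert (E : ((J^2*(a^2-b^2)^2 + a^2 + b^2)/2)^2 - (a^4 - a^2*b^2 + b^4) =
          (a^2-b^2)^2/4 * ((J ^ 2) ^ 2 * (a ^ 2 - b ^ 2) ^ 2 + 2 * J ^ 2 * (a ^ 2 + b ^ 2) - 3)) by field.
      rewrite Qd in E. lra. }
  assert (h1m2 : 1 - m^2 <> 0) by (clear - hMlt; lra).
  assert (h3m2 : 3 - m^2 <> 0) by (clear - hMlt; lra).
  assert (rn1 : 1 + m*u1 <> 0) by (unfold rh in rp1; clear - rp1; lra).
  assert (rn2 : 1 + m*u2 <> 0) by (unfold rh in rp2; clear - rp2; lra).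
  assert (rn3 : 1 + m*u3 <> 0) by (unfold rh in rp3; clear - rp3; lra).
  assert (hxx1 : x1 = a^2*j*u1) by (replace x1 with (a*X1) by (unfold X1; field; exact han); rewrite hu1; ring).
  assert (hxx2 : x2 = a^2*j*u2) by (replace x2 with (a*X2) by (unfold X2; field; exact han); rewrite hu2; ring).
  assert (hxx3 : x3 = a^2*j*u3) by (replace x3 with (a*X3) by (unfold X3; field; exact han); rewrite hu3; ring).
  assert (fp1 : 0 < edist (x1,y1) (f1 a b)) by (rewrite hr1; apply Rmult_lt_0_compat; assumption).
  assert (fp2 : 0 < edist (x2,y2) (f1 a b)) by (rewrite hr2; apply Rmult_lt_0_compat; assumption).
  assert (fp3 : 0 < edist (x3,y3) (f1 a b)) by (rewrite hr3; apply Rmult_lt_0_compat; assumption).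
  pose proof (powC a b rho x1 y1 hb hab fp1) as C1. pose proof (powC a b rho x2 y2 hb hab fp2) as C2.
  pose proof (powC a b rho x3 y3 hb hab fp3) as C3. cbv zeta in C1, C2, C3. fold c in C1, C2, C3.
  rewrite hr1 in C1. rewrite hr2 in C2. rewrite hr3 in C3.
  rewrite (cvt a b c j m u1 x1 rho (delta a b) hj ha hb han2 hcm hbc hdl rn1 h1m2 h3m2 hxx1) in C1.
  rewrite (cvt a b c j m u2 x2 rho (delta a b) hj ha hb han2 hcm hbc hdl rn2 h1m2 h3m2 hxx2) in C2.
  rewrite (cvt a b c j m u3 x3 rho (delta a b) hj ha hb han2 hcm hbc hdl rn3 h1m2 h3m2 hxx3) in C3.
  pose proof (inv_dist a b rho _ _ fp2 fp3) as I23.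
  pose proof (inv_dist a b rho _ _ fp3 fp1) as I31.
  pose proof (inv_dist a b rho _ _ fp1 fp2) as I12.
  rewrite (edist_sym (x3,y3) (x1,y1)) in I31.
  rewrite hr2, hr3 in I23. rewrite hr3, hr1 in I31. rewrite hr1, hr2 in I12. rewrite hd23 in I23. rewrite hd13 in I31. rewrite hd12 in I12.
  set (lam := 2*rho^2*j/((1+m^2)*(rh m u1 * rh m u2 * rh m u3))).
  assert (hrn1 : rh m u1 <> 0) by (clear - rp1; lra). assert (hrn2 : rh m u2 <> 0) by (clear - rp2; lra).
  assert (hrn3 : rh m u3 <> 0) by (clear - rp3; lra).
  pose proof (onepm2 m) as h1p.
  assert (L1 : edist (focus_inv a b rho (x2, y2)) (focus_inv a b rho (x3, y3)) = lam * muf m u1).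
  { rewrite I23. unfold lam, muf. field. repeat split; assumption. }
  assert (L2 : edist (focus_inv a b rho (x3, y3)) (focus_inv a b rho (x1, y1)) = lam * muf m u2).
  { rewrite I31. unfold lam, muf. field. repeat split; assumption. }
  assert (L3 : edist (focus_inv a b rho (x1, y1)) (focus_inv a b rho (x2, y2)) = lam * muf m u3).
  { rewrite I12. unfold lam, muf. field. repeat split; assumption. }
  assert (hR : 0 <= R9dag a b rho).
  { unfold R9dag.
    assert (hd : delta a b <= 2*a^2 - b^2).
    { unfold delta. rewrite <- (sqrt_pow2 (2*a^2-b^2)).
      - apply sqrt_le_1_alt. assert (0 <= 3*a^2*(a^2-b^2)) by (clear - ha hab2; nra).
        replace ((2*a^2-b^2)^2) with ((a^4 - a^2*b^2 + b^4) + 3*a^2*(a^2-b^2)) by ring. lra.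
      - clear - hb2 hab2. lra. }
    apply Rmult_le_pos; [apply Rmult_le_pos; [apply pow2_ge_0|lra]|].
    apply Rlt_le, Rinv_0_lt_compat. apply Rmult_lt_0_compat; [lra|exact hb2]. }
  assert (hKp : 0 < Kp m).
  { unfold Kp. apply Rmult_lt_0_compat; [clear - hMlt; lra|]. apply pow_lt. pose proof (pow2_ge_0 m). lra. }
  pose proof (inv_dist a b rho _ _ fp2 fp3) as J23.
  pose proof (inv_dist a b rho _ _ fp3 fp1) as J31.
  pose proof (inv_dist a b rho _ _ fp1 fp2) as J12.
  assert (hro2 : 0 < rho^2) by (apply pow_lt; exact hrho).
  assert (p31 : 0 < edist (x3,y3) (x1,y1)) by (rewrite edist_sym; exact p13).
  assert (q23 : 0 < edist (focus_inv a b rho (x2, y2)) (focus_inv a b rho (x3, y3))).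
  { rewrite J23. apply Rmult_lt_0_compat; [apply Rmult_lt_0_compat; assumption|]. apply Rinv_0_lt_compat, Rmult_lt_0_compat; assumption. }
  assert (q31 : 0 < edist (focus_inv a b rho (x3, y3)) (focus_inv a b rho (x1, y1))).
  { rewrite J31. apply Rmult_lt_0_compat; [apply Rmult_lt_0_compat; assumption|]. apply Rinv_0_lt_compat, Rmult_lt_0_compat; assumption. }
  assert (q12 : 0 < edist (focus_inv a b rho (x1, y1)) (focus_inv a b rho (x2, y2))).
  { rewrite J12. apply Rmult_lt_0_compat; [apply Rmult_lt_0_compat; assumption|]. apply Rinv_0_lt_compat, Rmult_lt_0_compat; assumption. }
  apply (final_asm _ _ _ (C9dag a b rho) (R9dag a b rho) lam (rho^4/(Kp m * a^2)) m u1 u2 u3).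
  - unfold lam. apply Rmult_lt_0_compat; [apply Rmult_lt_0_compat; lra|].
    apply Rinv_0_lt_compat, Rmult_lt_0_compat; [pose proof (pow2_ge_0 m); lra|].
    apply Rmult_lt_0_compat; [apply Rmult_lt_0_compat|]; assumption.
  - exact hR.
  - apply Rmult_lt_0_compat; [apply pow_lt; exact hrho|]. apply Rinv_0_lt_compat, Rmult_lt_0_compat; [exact hKp|]. clear - ha; nra.
  - exact L1.
  - exact L2.
  - exact L3.
  - exact q23.
  - exact q31.
  - exact q12.
  - unfold R9dag. exact C1.
  - unfold R9dag. exact C2.
  - unfold R9dag. exact C3.
  - unfold lam. assert (hj2' : j^2 = (3-m^2)*(1+m^2)/(4*a^2)) by (rewrite <- hT; field; exact han).
    assert (hKpn : Kp m <> 0) by (clear - hKp; lra).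
    assert (h3 : 3 - m^2 <> 0) by exact h3m2.
    replace ((2 * rho ^ 2 * j / ((1 + m ^ 2) * (rh m u1 * rh m u2 * rh m u3))) ^ 2)
      with (4*rho^4*j^2/((1+m^2)^2*(rh m u1 * rh m u2 * rh m u3)^2)) by (field; repeat split; assumption).
    rewrite hj2'. field. repeat split; assumption.
  - exact hrn1.
  - exact hrn2.
  - exact hrn3.
  - exact nn1.
  - exact nn2.
  - exact nn3.
  - exact h1m2.
  - exact vs.
  - exact vp.
Qed.

Theorem mainTheorem2 (a b rho : R) (hb : 0 < b) (hab : b < a) (hrho : 0 < rho) :
  (forall P1 P2 P3 : pt, three_periodic a b P1 P2 P3 ->
     edist (mittenpunkt (focus_inv a b rho P1) (focus_inv a b rho P2)
                       (focus_inv a b rho P3))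
          (C9dag a b rho) = R9dag a b rho) /\
  focus_inv a b rho (C9dag a b rho) = (- (a ^ 2 + b ^ 2) / cfoc a b, 0).
Proof.
  split.
  - exact (main_first a b rho hb hab hrho).
  - pose proof (cfoc_sq a b hab hb) as hc2. pose proof (cfoc_pos a b hab hb) as hc0.
    assert (hd : edist (C9dag a b rho) (f1 a b) = cfoc a b * rho^2/(2*b^2)).
    { unfold edist, C9dag, f1. cbn [fst snd].
      replace ((- cfoc a b * (1 + rho ^ 2 / (2 * b ^ 2)) - - cfoc a b) ^ 2 + (0 - 0) ^ 2)
        with ((cfoc a b * rho^2/(2*b^2))^2) by (field; lra).
      apply sqrt_pow2. apply Rmult_le_pos; [apply Rmult_le_pos; [lra|apply pow2_ge_0]|].
      apply Rlt_le, Rinv_0_lt_compat. nra. }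
    unfold focus_inv. rewrite hd. unfold C9dag, f1. cbn [fst snd].
    assert (rho <> 0) by lra. assert (b <> 0) by lra. assert (cfoc a b <> 0) by lra.
    f_equal.
    + replace (a^2) with ((cfoc a b)^2 + b^2) by lra. field. repeat split; assumption.
    + field. repeat split; assumption.
Qed.
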